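(* Let $\mathscr{T}\colon \mathbb{IDA}\to\mathbb{IM}$ be a functor satisfying (T1)–(T4) below. Then the functors $\Gamma\colon \mathbb{COL}\to\mathscr{T}\mathbb{ODA}$ and $\Psi\colon\mathscr{T}\mathbb{ODA}\to\mathbb{COL}$ described below, together with the natural isomorphisms $\mu\colon 1_{\mathbb{COL}}\Rightarrow \Psi\circ\Gamma$ with components $\mu_{\mathcal M}(m)=\{\pi_m\}$ and $\lambda\colon 1_{\mathscr{T}\mathbb{ODA}}\Rightarrow\Gamma\circ\Psi$ with components $\lambda_{\mathfrak K}(k)=\{\nu_{\mathfrak K}(s)\mid s\in S_k\}$ (where $S_k\subseteq\mathscr{T}(K)$ is the unique subset with $k=\bigsqcup S_k$), establish a categorical equivalence between $\mathbb{COL}$ and $\mathscr{T}\mathbb{ODA}$.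
   Context: An involutive unital quantale is $(Q,\bigsqcup,\odot,{}^*,e)$: $Q$ a complete join-semilattice (hence complete lattice with order $\sqsubseteq$, $0=\bigsqcup\emptyset$, $1=\bigsqcup Q$), $\odot$ associative and distributing over arbitrary joins in each argument, $e$ a two-sided unit, and ${}^*$ satisfying $x^{**}=x$, $(x\odot y)^*=y^*\odot x^*$, $(\bigsqcup_i x_i)^*=\bigsqcup_i x_i^*$. An involutive generalized dynamic algebra (IDA) is $\mathfrak K=(K,\bigsqcup,\odot,{}^*,{\sim},e)$ with $(K,\bigsqcup,\odot,{}^*,e)$ an involutive unital quantale and ${\sim}\colon K\to K$ such that for all $x,y\in K$ and all families $(x_i)_{i\in I}$: ${\sim}(x\odot{\sim}{\sim}y)={\sim}(x\odot y)$; ${\sim}(\bigsqcup_i{\sim}{\sim}x_i)={\sim}(\bigsqcup_i x_i)$; $({\sim}x)^*={\sim}x$; ${\sim}{\sim}({\sim}{\sim}x\odot y)={\sim}({\sim}x\sqcup{\sim}({\sim}x\sqcup y))$. Its test set is $\widetilde K=\{{\sim}k\mid k\in K\}$; for $W\subseteq\widetilde K$ put $\bigvee W={\sim}{\sim}(\bigsqcup W)$; for $w\in\widetilde K$ put $w^\perp={\sim}w$; $k\preceq l$ iff $\bigvee\{k,l\}=l$. For $k\in K,v\in\widetilde K$ put $k\bullet v={\sim}{\sim}(k\odot v)$, and $k\equiv l$ iff $k\bullet w=l\bullet w$ for all $w\in\widetilde K$. A morphism of IDAs is a map preserving arbitrary joins, $\odot$, ${}^*$, the unit and ${\sim}$;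 this gives the category $\mathbb{IDA}$. An IDA is semi-Foulis if $(\widetilde K,\preceq,{}^\perp)$ is a complete orthomodular lattice. $\mathbb{IM}$ is the category of involutive monoids $(M,\cdot,e,{}^* )$ ($x^{**}=x$, $(xy)^*=y^*x^*$) with maps preserving product, unit and involution. For an orthomodular lattice $\mathcal M=(M,\le,{}^\perp)$ and $m\in M$, the Sasaki projection is $\pi_m(x)=m\wedge(m^\perp\vee x)$. If $\mathcal M$ is complete, a map $f\colon M\to M$ is linear if there is $g\colon M\to M$ (unique, written $f^*$) with $f(x)\le y^\perp\iff x\le g(y)^\perp$ for all $x,y$. $\mathbf{Lin}(\mathcal M)$, the set of linear maps with pointwise joins, composition, involution $f\mapsto f^*$ and unit $\mathrm{id}_M$, is an involutive unital quantale, regarded as an IDA with ${\sim}f=\pi_{(f(1))^\perp}$; each $\pi_m$ is in $\mathbf{Lin}(\mathcal M)$ with $\pi_m^*=\pi_m$, and the test set of $\mathbf{Lin}(\mathcal M)$ is $\{\pi_m\mid m\in M\}$. For an involutive submonoid $L$ of $(\mathbf{Lin}(\mathcal M),\circ,{}^*,\mathrm{id}_M)$ containing all $\pi_m$, let $\mathscr P(L)=(\mathscr P(L),\bigcup,\odot,{}^*,{\sim},\{\mathrm{id}_M\})$ where $\mathscr P(L)$ is the powerset, $A\odot B=\{a\circ b\mid a\in A,b\in B\}$, $A^*=\{a^*\mid a\in A\}$, ${\sim}A=\{\pi_{(\bigvee_{a\in A}a(1))^\perp}\}$; it is an IDA. $\mathscr{T}\colon\mathbb{IDA}\to\mathbb{IM}$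 is a functor with: (T1) for every IDA $\mathfrak K$, $\widetilde K\subseteq\mathscr T(K)\subseteq K$ and $\mathscr T(\mathfrak K)=(\mathscr T(K),\odot,{}^*,e)$ is an involutive submonoid; (T2) for every semi-Foulis IDA $\mathfrak K$ such that for all $s,t\in\mathscr T(K)$, $s=t$ iff $s\equiv t$, the map $\nu_{\mathfrak K}\colon\mathscr T(\mathfrak K)\to\mathscr T(\mathbf{Lin}(\widetilde{\mathfrak K}))$, $\nu_{\mathfrak K}(k)=k\bullet(-)$, is an isomorphism in $\mathbb{IM}$; (T3) for every complete orthomodular lattice $\mathcal M$, $f\mapsto\{f\}$ is an isomorphism $\mathscr T(\mathbf{Lin}(\mathcal M))\to\mathscr T(\mathscr P(\mathscr T(\mathbf{Lin}(\mathcal M))))$ in $\mathbb{IM}$; (T4) for every IDA morphism $f\colon\mathfrak K_1\to\mathfrak K_2$, $\mathscr T(f)$ is the restriction of $f$ to $\mathscr T(K_1)$. A $\mathscr T$-based orthomodular dynamic algebra is an IDA $\mathfrak K$ with: (TODA1) $(\widetilde K,\preceq,{}^\perp)$ is a complete orthomodular lattice; (TODA2) any $A$ with $\mathscr T(K)\subseteq A\subseteq K$ closed under $\odot$, ${}^*$ and arbitrary joins equals $K$; (TODA3) for $S,T\subseteq\mathscr T(K)$, $\bigsqcup S=\bigsqcup T$ iff $S=T$; (TODA4) for $s,t\in\mathscr T(K)$, $s=t$ iff $s\equiv t$. The category $\mathscr T\mathbb{ODA}$ has these as objects and bijective IDA morphisms as morphisms. $\mathbb{COL}$ has complete orthomodular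 lattices as objects and ortholattice isomorphisms (bijections $g$ with $m\le n\iff g(m)\le g(n)$ and $g(m^\perp)=g(m)^\perp$) as morphisms. $\Gamma(\mathcal M)=\mathscr P(\mathscr T(\mathbf{Lin}(\mathcal M)))$ and for an ortholattice isomorphism $k$, $\Gamma(k)(A)=\{k\circ a\circ k^{-1}\mid a\in A\}$. $\Psi(\mathfrak K)=(\widetilde K,\preceq,{}^\perp)$ and $\Psi(\phi)=\phi|_{\widetilde K}$. *)

(* Defs.v *)
From Stdlib Require Import ClassicalEpsilon.


Definition pair2 {A : Type} (x y : A) : A -> Prop := fun z => z = x \/ z = y.
Definition imageP {A B : Type} (f : A -> B) (S : A -> Prop) : B -> Prop :=
  fun z => exists y, S y /\ z = f y.
Definition bij {A B : Type} (f : A -> B) : Prop :=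
  (forall x y, f x = f y -> x = y) /\ (forall y, exists x, f x = y).

Record OLstr := mkOL {
  ocar : Type;
  ole : ocar -> ocar -> Prop;
  oc : ocar -> ocar
}.

Definition is_lub (M : OLstr) (S : ocar M -> Prop) (s : ocar M) : Prop :=
  (forall x, S x -> ole M x s) /\ (forall u, (forall x, S x -> ole M x u) -> ole M s u).
Definition is_glb (M : OLstr) (S : ocar M -> Prop) (s : ocar M) : Prop :=
  (forall x, S x -> ole M s x) /\ (forall u, (forall x, S x -> ole M u x) -> ole M u s).

Definition is_COL (M : OLstr) : Prop :=
  (forall x, ole M x x) /\
  (forall x y, ole M x y -> ole M y x -> x = y) /\
  (forall x y z, ole M x y -> ole M y z -> ole M x z) /\
  (forall S : ocar M -> Prop, exists s, is_lub M S s) /\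
  (forall x, oc M (oc M x) = x) /\
  (forall x y, ole M x y -> ole M (oc M y) (oc M x)) /\
  (* x /\ x^perp = 0 *)
  (forall x z, ole M z x -> ole M z (oc M x) -> forall w, ole M z w) /\
  (* x \/ x^perp = 1 *)
  (forall x z, ole M x z -> ole M (oc M x) z -> forall w, ole M w z) /\
  (* orthomodular law: x <= y -> y = x \/ (y /\ x^perp) *)
  (forall x y m j, ole M x y -> is_glb M (pair2 y (oc M x)) m ->
     is_lub M (pair2 x m) j -> j = y).

Definition is_COL_mor (M N : OLstr) (g : ocar M -> ocar N) : Prop :=
  bij g /\ (forall m n, ole M m n <-> ole N (g m) (g n)) /\
  (forall m, g (oc M m) = oc N (g m)).

(* sups/infs in a complete lattice (chosen classically; x0 only witnesses
   inhabitation) *)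
Definition osup (M : OLstr) (x0 : ocar M) (S : ocar M -> Prop) : ocar M :=
  epsilon (inhabits x0) (is_lub M S).
Definition oinf (M : OLstr) (x0 : ocar M) (S : ocar M -> Prop) : ocar M :=
  epsilon (inhabits x0) (is_glb M S).
Definition otop (M : OLstr) (x0 : ocar M) : ocar M := osup M x0 (fun _ => True).

(* Sasaki projection pi_m(x) = m /\ (m^perp \/ x) *)
Definition sasaki (M : OLstr) (m : ocar M) : ocar M -> ocar M :=
  fun x => oinf M m (pair2 m (osup M m (pair2 (oc M m) x))).

Definition is_adjoint (M : OLstr) (f g : ocar M -> ocar M) : Prop :=
  forall x y, ole M (f x) (oc M y) <-> ole M x (oc M (g y)).
Definition linear (M : OLstr) (f : ocar M -> ocar M) : Prop :=
  exists g, is_adjoint M f g.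
Definition adj (M : OLstr) (f : ocar M -> ocar M) : ocar M -> ocar M :=
  epsilon (inhabits (fun x : ocar M => x)) (is_adjoint M f).

Definition LinT (M : OLstr) : Type := {f : ocar M -> ocar M | linear M f}.

Lemma id_linear (M : OLstr) : linear M (fun x => x).
Proof. exists (fun x => x). intros x y. split; intro H; exact H. Qed.

(* packs a map into Lin(M); used only on maps that are linear (the operations
   of Lin(M) are closed), the default branch is never reached there *)
Definition mkLin (M : OLstr) (f : ocar M -> ocar M) : LinT M :=
  match excluded_middle_informative (linear M f) with
  | left p => exist _ f p
  | right _ => exist _ (fun x => x) (id_linear M)
  end.

Record IDAstr := mkIDA {
  icar : Type;
  ijoin : (icar -> Prop) -> icar;
  imul : icar -> icar -> icar;
  iinv : icar -> icar;
  ineg : icar -> icar;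
  iunit : icar
}.

Section IDAdefs.
Variable K : IDAstr.
Local Notation J := (ijoin K).
Local Notation "x * y" := (imul K x y).
Local Notation "~~ x" := (ineg K x) (at level 35).

Definition ile (x y : icar K) : Prop := J (pair2 x y) = y.

Definition is_IQuantale : Prop :=
  (forall x, ile x x) /\
  (forall x y, ile x y -> ile y x -> x = y) /\
  (forall x y z, ile x y -> ile y z -> ile x z) /\
  (forall S x, S x -> ile x (J S)) /\
  (forall S u, (forall x, S x -> ile x u) -> ile (J S) u) /\
  (forall x y z, (x * y) * z = x * (y * z)) /\
  (forall x, iunit K * x = x) /\ (forall x, x * iunit K = x) /\
  (forall x S, x * J S = J (imageP (fun y => x * y) S)) /\
  (forall S y, J S * y = J (imageP (fun x => x * y) S)) /\
  (forall x, iinv K (iinv K x) = x) /\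
  (forall x y, iinv K (x * y) = iinv K y * iinv K x) /\
  (forall S, iinv K (J S) = J (imageP (iinv K) S)).

Definition is_IDA : Prop :=
  is_IQuantale /\
  (forall x y, ~~ (x * ~~ (~~ y)) = ~~ (x * y)) /\
  (forall S, ~~ (J (imageP (fun x => ~~ (~~ x)) S)) = ~~ (J S)) /\
  (forall x, iinv K (~~ x) = ~~ x) /\
  (forall x y, ~~ (~~ (~~ (~~ x) * y)) =
               ~~ (J (pair2 (~~ x) (~~ (J (pair2 (~~ x) y)))))).

Definition tests (k : icar K) : Prop := exists l, k = ~~ l.
Definition tjoin (W : icar K -> Prop) : icar K := ~~ (~~ (J W)).
Definition tle (k l : icar K) : Prop := tjoin (pair2 k l) = l.
Definition bullet (k v : icar K) : icar K := ~~ (~~ (k * v)).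
Definition equivT (k l : icar K) : Prop :=
  forall w, tests w -> bullet k w = bullet l w.
End IDAdefs.

Definition is_IDA_mor (K1 K2 : IDAstr) (f : icar K1 -> icar K2) : Prop :=
  (forall S, f (ijoin K1 S) = ijoin K2 (imageP f S)) /\
  (forall x y, f (imul K1 x y) = imul K2 (f x) (f y)) /\
  (forall x, f (iinv K1 x) = iinv K2 (f x)) /\
  f (iunit K1) = iunit K2 /\
  (forall x, f (ineg K1 x) = ineg K2 (f x)).

Definition Psi (K : IDAstr) : OLstr :=
  {| ocar := {k : icar K | tests K k};
     ole := fun a b => tle K (proj1_sig a) (proj1_sig b);
     oc := fun a => exist (tests K) (ineg K (proj1_sig a))
                     (ex_intro _ (proj1_sig a) eq_refl) |}.

Definition Lin (M : OLstr) : IDAstr :=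
  {| icar := LinT M;
     ijoin := fun F => mkLin M (fun x => osup M x (fun y => exists f : LinT M,
                                   F f /\ y = proj1_sig f x));
     imul := fun f g => mkLin M (fun x => proj1_sig f (proj1_sig g x));
     iinv := fun f => mkLin M (adj M (proj1_sig f));
     ineg := fun f => mkLin M (fun x => sasaki M (oc M (proj1_sig f (otop M x))) x);
     iunit := mkLin M (fun x => x) |}.

Definition piL (M : OLstr) (m : ocar M) : LinT M := mkLin M (sasaki M m).

Definition nu (K : IDAstr) (k : icar K) : ocar (Psi K) -> ocar (Psi K) :=
  fun w => exist (tests K) (bullet K k (proj1_sig w))
             (ex_intro _ (ineg K (imul K k (proj1_sig w))) eq_refl).
Definition nuL (K : IDAstr) (k : icar K) : LinT (Psi K) := mkLin (Psi K) (nu K k).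

(* P(L) for an involutive submonoid L of an IDA (used with K = Lin(M));
   ~A = { ~(|_| A) }, which for Lin(M) is { pi_{(\/_{a in A} a(1))^perp} } *)
Definition Pset (K : IDAstr) (L : icar K -> Prop) : IDAstr :=
  {| icar := {x : icar K | L x} -> Prop;
     ijoin := fun S c => exists A, S A /\ A c;
     imul := fun A B c => exists a b, A a /\ B b /\
                            proj1_sig c = imul K (proj1_sig a) (proj1_sig b);
     iinv := fun A c => exists a, A a /\ proj1_sig c = iinv K (proj1_sig a);
     ineg := fun A c => proj1_sig c =
                  ineg K (ijoin K (imageP (@proj1_sig _ _) A));
     iunit := fun c => proj1_sig c = iunit K |}.

(* a "T-structure": the object part of a functor T : IDA -> IM satisfying
   (T1),(T4) is a subset T(K) of each carrier; its morphism part is restriction *)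
Definition TFun : Type := forall K : IDAstr, icar K -> Prop.

Definition Gamma (T : TFun) (M : OLstr) : IDAstr := Pset (Lin M) (T (Lin M)).

Definition singL (T : TFun) (M : OLstr) (f : LinT M) : icar (Gamma T M) :=
  fun c => proj1_sig c = f.

(* Gamma(k)(A) = { k o a o k^{-1} | a in A }, written as c o k = k o a *)
Definition Gamma_mor (T : TFun) (M N : OLstr) (k : ocar M -> ocar N)
  : icar (Gamma T M) -> icar (Gamma T N) :=
  fun A c => exists a, A a /\
     forall x, proj1_sig (proj1_sig c) (k x) = k (proj1_sig (proj1_sig a) x).

Definition T1 (T : TFun) : Prop :=
  forall K, is_IDA K ->
    (forall k, tests K k -> T K k) /\
    (forall x y, T K x -> T K y -> T K (imul K x y)) /\
    (forall x, T K x -> T K (iinv K x)) /\ T K (iunit K).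

Definition T2 (T : TFun) : Prop :=
  forall K, is_IDA K -> is_COL (Psi K) ->
    (forall s t, T K s -> T K t -> (s = t <-> equivT K s t)) ->
    (forall k, T K k -> linear (Psi K) (nu K k) /\ T (Lin (Psi K)) (nuL K k)) /\
    (forall k l, T K k -> T K l -> nuL K k = nuL K l -> k = l) /\
    (forall f, T (Lin (Psi K)) f -> exists k, T K k /\ nuL K k = f) /\
    (forall k l, T K k -> T K l ->
       nuL K (imul K k l) = imul (Lin (Psi K)) (nuL K k) (nuL K l)) /\
    nuL K (iunit K) = iunit (Lin (Psi K)) /\
    (forall k, T K k -> nuL K (iinv K k) = iinv (Lin (Psi K)) (nuL K k)).

Definition T3 (T : TFun) : Prop :=
  forall M, is_COL M ->
    (forall f, T (Lin M) f -> T (Gamma T M) (singL T M f)) /\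
    (forall f g, T (Lin M) f -> T (Lin M) g -> singL T M f = singL T M g -> f = g) /\
    (forall A, T (Gamma T M) A -> exists f, T (Lin M) f /\ A = singL T M f) /\
    (forall f g, T (Lin M) f -> T (Lin M) g ->
       singL T M (imul (Lin M) f g) = imul (Gamma T M) (singL T M f) (singL T M g)) /\
    singL T M (iunit (Lin M)) = iunit (Gamma T M) /\
    (forall f, T (Lin M) f -> singL T M (iinv (Lin M) f) = iinv (Gamma T M) (singL T M f)).

Definition T4 (T : TFun) : Prop :=
  forall K1 K2 (f : icar K1 -> icar K2), is_IDA K1 -> is_IDA K2 ->
    is_IDA_mor K1 K2 f -> forall k, T K1 k -> T K2 (f k).

Definition is_TODA (T : TFun) (K : IDAstr) : Prop :=
  is_IDA K /\
  is_COL (Psi K) /\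
  (forall A : icar K -> Prop, (forall x, T K x -> A x) ->
     (forall x y, A x -> A y -> A (imul K x y)) ->
     (forall x, A x -> A (iinv K x)) ->
     (forall S, (forall x, S x -> A x) -> A (ijoin K S)) ->
     forall x, A x) /\
  (forall S U : icar K -> Prop, (forall x, S x -> T K x) -> (forall x, U x -> T K x) ->
     (ijoin K S = ijoin K U <-> (forall x, S x <-> U x))) /\
  (forall s t, T K s -> T K t -> (s = t <-> equivT K s t)).

Definition is_TODA_mor (K1 K2 : IDAstr) (f : icar K1 -> icar K2) : Prop :=
  is_IDA_mor K1 K2 f /\ bij f.

Definition lam (T : TFun) (K : IDAstr) (k : icar K) : icar (Gamma T (Psi K)) :=
  fun c => exists S : icar K -> Prop, (forall s, S s -> T K s) /\ ijoin K S = k /\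
             exists s, S s /\ proj1_sig c = nuL K s.

(* Main.v *)
Require Import Defs.
From Stdlib Require Import ClassicalEpsilon ProofIrrelevance FunctionalExtensionality PropExtensionality.

Section OL.
Variable M : OLstr.
Hypothesis HM : is_COL M.
Local Notation le := (ole M).
Local Notation oc := (oc M).

Lemma le_refl x : le x x. Proof. apply HM. Qed.
Lemma le_antisym x y : le x y -> le y x -> x = y. Proof. apply HM. Qed.
Lemma le_trans x y z : le x y -> le y z -> le x z. Proof. apply HM. Qed.
Lemma lub_ex S : exists s, is_lub M S s. Proof. apply HM. Qed.
Lemma ocK x : oc (oc x) = x. Proof. apply HM. Qed.
Lemma oc_anti x y : le x y -> le (oc y) (oc x). Proof. apply HM. Qed.
Lemma oml x y m j : le x y -> is_glb M (pair2 y (oc x)) m ->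
     is_lub M (pair2 x m) j -> j = y.
Proof. apply HM. Qed.

Lemma oc_le_iff x y : le x y <-> le (oc y) (oc x).
Proof. split; [apply oc_anti|]. intro H. apply oc_anti in H. rewrite !ocK in H. exact H. Qed.
Lemma le_oc_swap x y : le x (oc y) <-> le y (oc x).
Proof. rewrite oc_le_iff, ocK. tauto. Qed.

Lemma lub_unique S a b : is_lub M S a -> is_lub M S b -> a = b.
Proof. intros [A1 A2] [B1 B2]. apply le_antisym; auto. Qed.
Lemma glb_unique S a b : is_glb M S a -> is_glb M S b -> a = b.
Proof. intros [A1 A2] [B1 B2]. apply le_antisym; auto. Qed.

Lemma glb_ex S : exists s, is_glb M S s.
Proof.
  destruct (lub_ex (fun u => forall x, S x -> le u x)) as [s [H1 H2]].
  exists s. split.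
  - intros x Sx. apply H2. intros u Hu. auto.
  - intros u Hu. apply H1. exact Hu.
Qed.

Lemma osup_spec x0 S : is_lub M S (osup M x0 S).
Proof. unfold osup. apply epsilon_spec. apply lub_ex. Qed.
Lemma oinf_spec x0 S : is_glb M S (oinf M x0 S).
Proof. unfold oinf. apply epsilon_spec. apply glb_ex. Qed.
Lemma osup_eq x0 S s : is_lub M S s -> osup M x0 S = s.
Proof. intro H. eapply lub_unique; [apply osup_spec|exact H]. Qed.
Lemma oinf_eq x0 S s : is_glb M S s -> oinf M x0 S = s.
Proof. intro H. eapply glb_unique; [apply oinf_spec|exact H]. Qed.

Lemma is_lub_ext (S S' : ocar M -> Prop) s : (forall y, S y <-> S' y) -> is_lub M S s -> is_lub M S' s.
Proof. intros E [H1 H2]. split; [intros x Hx; apply H1, E, Hx|intros u Hu; apply H2; intros x Hx; apply Hu, E, Hx]. Qed.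

Definition jn x y := osup M x (pair2 x y).
Definition mt x y := oinf M x (pair2 x y).

Lemma jn_l x y : le x (jn x y). Proof. apply (osup_spec x (pair2 x y)). left; auto. Qed.
Lemma jn_r x y : le y (jn x y). Proof. apply (osup_spec x (pair2 x y)). right; auto. Qed.
Lemma jn_lub x y z : le x z -> le y z -> le (jn x y) z.
Proof. intros. apply (osup_spec x (pair2 x y)). intros w [->| ->]; auto. Qed.
Lemma mt_l x y : le (mt x y) x. Proof. apply (oinf_spec x (pair2 x y)). left; auto. Qed.
Lemma mt_r x y : le (mt x y) y. Proof. apply (oinf_spec x (pair2 x y)). right; auto. Qed.
Lemma mt_glb x y z : le z x -> le z y -> le z (mt x y).
Proof. intros. apply (oinf_spec x (pair2 x y)). intros w [->| ->]; auto. Qed.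

Lemma jn_is_lub x y : is_lub M (pair2 x y) (jn x y). Proof. apply osup_spec. Qed.
Lemma mt_is_glb x y : is_glb M (pair2 x y) (mt x y). Proof. apply oinf_spec. Qed.

Lemma jn_char x y s : le x s -> le y s -> (forall z, le x z -> le y z -> le s z) -> jn x y = s.
Proof. intros. apply le_antisym. apply jn_lub; auto. apply H1; [apply jn_l|apply jn_r]. Qed.
Lemma mt_char x y s : le s x -> le s y -> (forall z, le z x -> le z y -> le z s) -> mt x y = s.
Proof. intros. apply le_antisym. apply H1; [apply mt_l|apply mt_r]. apply mt_glb; auto. Qed.

Lemma jn_pair_eq x0 x y : osup M x0 (pair2 x y) = jn x y.
Proof. apply osup_eq, jn_is_lub. Qed.
Lemma mt_pair_eq x0 x y : oinf M x0 (pair2 x y) = mt x y.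
Proof. apply oinf_eq, mt_is_glb. Qed.

Lemma oc_jn x y : oc (jn x y) = mt (oc x) (oc y).
Proof.
  symmetry. apply mt_char.
  - apply oc_anti, jn_l.
  - apply oc_anti, jn_r.
  - intros z H1 H2. apply le_oc_swap. apply jn_lub; apply le_oc_swap; auto.
Qed.
Lemma oc_mt x y : oc (mt x y) = jn (oc x) (oc y).
Proof. rewrite <- (ocK (jn _ _)), oc_jn, !ocK. reflexivity. Qed.

Lemma oml' x y : le x y -> jn x (mt y (oc x)) = y.
Proof. intro H. eapply oml; [exact H|apply mt_is_glb|apply jn_is_lub]. Qed.

Lemma oml_dual a m : le a m -> mt m (jn a (oc m)) = a.
Proof.
  intro H. apply oc_anti in H. apply oml' in H. rewrite ocK in H.
  assert (E : oc (mt m (jn a (oc m))) = oc a). { rewrite oc_mt, oc_jn, ocK. exact H. }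
  apply (f_equal oc) in E. rewrite !ocK in E. exact E.
Qed.

Lemma jn_mono a b c d : le a c -> le b d -> le (jn a b) (jn c d).
Proof. intros. apply jn_lub. apply le_trans with c; auto using jn_l. apply le_trans with d; auto using jn_r. Qed.
Lemma mt_mono a b c d : le a c -> le b d -> le (mt a b) (mt c d).
Proof. intros. apply mt_glb. apply le_trans with a; auto using mt_l. apply le_trans with b; auto using mt_r. Qed.

Lemma jn_comm x y : jn x y = jn y x.
Proof. apply jn_char; auto using jn_l, jn_r. intros; apply jn_lub; auto. Qed.
Lemma mt_comm x y : mt x y = mt y x.
Proof. apply mt_char; auto using mt_l, mt_r. intros; apply mt_glb; auto. Qed.

Definition sas m x := mt m (jn (oc m) x).

Lemma sasaki_eq m x : sasaki M m x = sas m x.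
Proof. unfold sasaki, sas. rewrite jn_pair_eq, mt_pair_eq. reflexivity. Qed.

Lemma sas_mono m x y : le x y -> le (sas m x) (sas m y).
Proof. intro. apply mt_mono. apply le_refl. apply jn_mono; auto using le_refl. Qed.

Lemma sas_res m x y : le (sas m x) y <-> le x (jn (oc m) (mt m y)).
Proof.
  split; intro H.
  - eapply le_trans with (jn (oc m) (sas m x)).
    + unfold sas. rewrite mt_comm.
      pose proof (oml' (oc m) (jn (oc m) x) (jn_l _ _)) as E. rewrite ocK in E.
      rewrite E. apply jn_r.
    + apply jn_mono. apply le_refl. apply mt_glb. apply mt_l. exact H.
  - eapply le_trans. apply sas_mono. exact H.
    unfold sas.
    assert (E : jn (oc m) (jn (oc m) (mt m y)) = jn (oc m) (mt m y)).
    { apply jn_char. apply jn_l. apply le_refl. intros; auto. }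
    rewrite E. rewrite jn_comm, oml_dual. apply mt_r. apply mt_l.
Qed.

Lemma sas_adj m x y : le (sas m x) (oc y) <-> le x (oc (sas m y)).
Proof.
  rewrite sas_res. unfold sas. rewrite oc_mt, oc_jn, ocK. tauto.
Qed.

Definition is_top t := forall x, le x t.
Lemma otop_top x0 : is_top (otop M x0).
Proof. intro x. apply (osup_spec x0 (fun _ => True)). exact I. Qed.
Lemma otop_eq x y : otop M x = otop M y.
Proof. apply le_antisym; apply otop_top. Qed.

Lemma sas_top m t : is_top t -> sas m t = m.
Proof.
  intro Ht. unfold sas.
  rewrite (jn_char (oc m) t t); [| apply Ht | apply le_refl | auto].
  apply mt_char; auto using le_refl.
Qed.

End OL.

Section LinS.
Variable M : OLstr.
Hypothesis HM : is_COL M.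
Local Notation le := (ole M).
Local Notation oc := (oc M).
Local Notation LJ := (ijoin (Lin M)).
Local Notation LM := (imul (Lin M)).
Local Notation LI := (iinv (Lin M)).
Local Notation LN := (ineg (Lin M)).
Local Notation pr := (@proj1_sig _ _).

Lemma lub_le_iff S s u : is_lub M S s -> (le s u <-> forall x, S x -> le x u).
Proof. intros [H1 H2]. split; auto. intros H x Sx. eapply le_trans; eauto. Qed.

Lemma top_ex : exists t, is_top M t.
Proof. destruct (lub_ex M HM (fun _ => True)) as [t [Ht _]]. exists t. intro x. apply Ht. exact I. Qed.
Lemma top_unique a b : is_top M a -> is_top M b -> a = b.
Proof. intros. apply (le_antisym M HM); auto. Qed.

Lemma is_adj_sym f g : is_adjoint M f g -> is_adjoint M g f.
Proof.
  intros H x y. rewrite (le_oc_swap M HM), <- (H y x), (le_oc_swap M HM). tauto.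
Qed.
Lemma adj_unique f g g' : is_adjoint M f g -> is_adjoint M f g' -> g = g'.
Proof.
  intros H1 H2. extensionality y.
  assert (E : oc (g y) = oc (g' y)).
  { apply (le_antisym M HM).
    - apply H2, H1, le_refl, HM.
    - apply H1, H2, le_refl, HM. }
  apply (f_equal oc) in E. rewrite !(ocK M HM) in E. exact E.
Qed.
Lemma lin_res f g x z : is_adjoint M f g -> (le (f x) z <-> le x (oc (g (oc z)))).
Proof. intro H. rewrite <- (H x (oc z)), (ocK M HM). tauto. Qed.
Lemma lin_mono f g x y : is_adjoint M f g -> le x y -> le (f x) (f y).
Proof. intros H Hxy. apply (lin_res _ _ _ _ H). apply (le_trans M HM) with y; auto. apply (lin_res _ _ _ _ H). apply le_refl, HM. Qed.
Lemma lin_lub f g S s : is_adjoint M f g -> is_lub M S s ->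
  is_lub M (fun y => exists x, S x /\ y = f x) (f s).
Proof.
  intros H Hs. split.
  - intros y [x [Sx ->]]. eapply lin_mono; eauto. apply Hs, Sx.
  - intros u Hu. apply (lin_res _ _ _ _ H). apply Hs. intros x Sx.
    apply (lin_res _ _ _ _ H). apply Hu. eauto.
Qed.
Lemma adj_spec f : linear M f -> is_adjoint M f (adj M f).
Proof. intro H. unfold adj. apply epsilon_spec. exact H. Qed.

Lemma Lin_ext (a b : LinT M) : pr a = pr b -> a = b.
Proof. destruct a, b; simpl. intros ->. f_equal. apply proof_irrelevance. Qed.
Lemma mkLin_proj f : linear M f -> pr (mkLin M f) = f.
Proof. intro H. unfold mkLin. destruct excluded_middle_informative; [reflexivity|contradiction]. Qed.
Lemma mkLin_pr a : mkLin M (pr a) = a.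
Proof. apply Lin_ext. apply mkLin_proj. exact (proj2_sig a). Qed.
Lemma lin_pr (a : LinT M) : linear M (pr a). Proof. exact (proj2_sig a). Qed.

Lemma comp_adj f g f' g' : is_adjoint M f g -> is_adjoint M f' g' ->
  is_adjoint M (fun x => f (f' x)) (fun y => g' (g y)).
Proof. intros H H' x y. rewrite (H (f' x) y), (H' x (g y)). tauto. Qed.

Lemma sup_adj (F : LinT M -> Prop) (h k : ocar M -> ocar M) :
  (forall x, is_lub M (fun y => exists f, F f /\ y = pr f x) (h x)) ->
  (forall y, is_lub M (fun z => exists f, F f /\ z = adj M (pr f) y) (k y)) ->
  is_adjoint M h k.
Proof.
  intros Hh Hk x y.
  rewrite (lub_le_iff _ _ _ (Hh x)), (le_oc_swap M HM), (lub_le_iff _ _ _ (Hk y)).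
  split.
  - intros H z [f [Ff ->]]. apply (le_oc_swap M HM).
    apply (adj_spec _ (lin_pr f)). apply H. eauto.
  - intros H z [f [Ff ->]]. apply (adj_spec _ (lin_pr f)). apply (le_oc_swap M HM).
    apply H. eauto.
Qed.

Lemma sas_lin m : is_adjoint M (sas M m) (sas M m).
Proof. intros x y. apply sas_adj, HM. Qed.

Lemma LM_proj (f g : LinT M) : pr (LM f g) = fun x => pr f (pr g x).
Proof.
  simpl. apply mkLin_proj. destruct (lin_pr f) as [a Ha], (lin_pr g) as [b Hb].
  eexists. apply comp_adj; eauto.
Qed.
Lemma LI_proj (f : LinT M) : pr (LI f) = adj M (pr f).
Proof.
  simpl. apply mkLin_proj. exists (pr f). apply is_adj_sym, adj_spec, lin_pr.
Qed.
Lemma LU_proj : pr (iunit (Lin M)) = fun x => x.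
Proof. simpl. apply mkLin_proj, id_linear. Qed.

Lemma LJ_lin F : linear M (fun x => osup M x (fun y => exists f : LinT M, F f /\ y = pr f x)).
Proof.
  exists (fun y => osup M y (fun z => exists f, F f /\ z = adj M (pr f) y)).
  apply (sup_adj F); intros; apply osup_spec, HM.
Qed.
Lemma LJ_proj F : pr (LJ F) = fun x => osup M x (fun y => exists f : LinT M, F f /\ y = pr f x).
Proof. simpl. apply mkLin_proj, LJ_lin. Qed.
Lemma LJ_lub F x : is_lub M (fun y => exists f, F f /\ y = pr f x) (pr (LJ F) x).
Proof. rewrite LJ_proj. apply osup_spec, HM. Qed.
Lemma LJ_eq F x s : is_lub M (fun y => exists f, F f /\ y = pr f x) s -> pr (LJ F) x = s.
Proof. intro H. eapply lub_unique; [exact HM|apply LJ_lub|exact H]. Qed.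

Lemma LN_lin (f : LinT M) : linear M (fun x => sasaki M (oc (pr f (otop M x))) x).
Proof.
  destruct top_ex as [t Ht]. exists (sas M (oc (pr f t))).
  intros x y. rewrite sasaki_eq by exact HM.
  rewrite (top_unique (otop M x) t) by (auto; apply otop_top, HM).
  apply sas_lin.
Qed.
Lemma LN_proj (f : LinT M) t : is_top M t -> pr (LN f) = sas M (oc (pr f t)).
Proof.
  intro Ht. simpl. rewrite mkLin_proj by apply LN_lin. extensionality x.
  rewrite sasaki_eq by exact HM.
  rewrite (top_unique (otop M x) t) by (auto; apply otop_top, HM). reflexivity.
Qed.
Lemma LN_top (f : LinT M) t : is_top M t -> pr (LN f) t = oc (pr f t).
Proof. intro Ht. rewrite (LN_proj f t Ht). apply sas_top; auto. Qed.
Lemma LNN_proj (f : LinT M) t : is_top M t -> pr (LN (LN f)) = sas M (pr f t).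
Proof. intro Ht. rewrite (LN_proj _ t Ht), LN_top, (ocK M HM) by exact Ht. reflexivity. Qed.

Lemma piL_proj m : pr (piL M m) = sas M m.
Proof.
  unfold piL. extensionality x. rewrite mkLin_proj. apply sasaki_eq, HM.
  exists (sasaki M m). intros a b. rewrite !sasaki_eq by exact HM. apply sas_lin.
Qed.
Lemma LN_piL (f : LinT M) t : is_top M t -> LN f = piL M (oc (pr f t)).
Proof. intro Ht. apply Lin_ext. rewrite piL_proj. apply LN_proj, Ht. Qed.

Lemma ile_Lin (f g : LinT M) : ile (Lin M) f g <-> forall x, le (pr f x) (pr g x).
Proof.
  unfold ile. split.
  - intros H x. rewrite <- H. apply LJ_lub. exists f. split; [left|]; reflexivity.
  - intro H. apply Lin_ext. extensionality x. apply LJ_eq. split.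
    + intros y [h [[-> | ->] ->]]; auto. apply le_refl, HM.
    + intros u Hu. apply Hu. exists g. split; [right|]; reflexivity.
Qed.

Lemma Lin_IDA : is_IDA (Lin M).
Proof.
  destruct top_ex as [t Ht].
  split; [split|].
  { intro x. apply ile_Lin. intro. apply le_refl, HM. }
  split.
  { intros x y H1 H2. rewrite ile_Lin in H1, H2. apply Lin_ext. extensionality z.
    apply (le_antisym M HM); auto. }
  split.
  { intros x y z H1 H2. rewrite ile_Lin in H1, H2. apply ile_Lin. intro w. eapply (le_trans M HM); [apply H1|apply H2]. }
  split.
  { intros S x Sx. apply ile_Lin. intro z. apply LJ_lub. eauto. }
  split.
  { intros S u H. apply ile_Lin. intro z. apply LJ_lub. intros y [f [Sf ->]].
    specialize (H f Sf). rewrite ile_Lin in H. auto. }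
  split.
  { intros. apply Lin_ext. rewrite !LM_proj. reflexivity. }
  split.
  { intros. apply Lin_ext. rewrite LM_proj, LU_proj. reflexivity. }
  split.
  { intros. apply Lin_ext. rewrite LM_proj, LU_proj. reflexivity. }
  split.
  { intros x S. apply Lin_ext. extensionality z. rewrite LM_proj. symmetry. apply LJ_eq.
    destruct (lin_pr x) as [g Hg].
    eapply is_lub_ext; [|apply (lin_lub _ _ _ _ Hg (LJ_lub S z))].
    intro y. split.
    - intros [w [[f [Sf ->]] ->]]. exists (LM x f). split. exists f; auto.
      rewrite LM_proj. reflexivity.
    - intros [h [[f [Sf ->]] ->]]. rewrite LM_proj. exists (pr f z). split; eauto. }
  split.
  { intros S y. apply Lin_ext. extensionality z. rewrite LM_proj. symmetry. apply LJ_eq.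
    eapply is_lub_ext; [|apply (LJ_lub S)].
    intro w. split.
    - intros [f [Sf ->]]. exists (LM f y). split. exists f; auto. rewrite LM_proj. reflexivity.
    - intros [h [[f [Sf ->]] ->]]. rewrite LM_proj. eauto. }
  split.
  { intro x. apply Lin_ext. rewrite !LI_proj.
    eapply adj_unique. apply adj_spec. exists (pr x). apply is_adj_sym, adj_spec, lin_pr.
    apply is_adj_sym, adj_spec, lin_pr. }
  split.
  { intros x y. apply Lin_ext. rewrite LM_proj, !LI_proj, LM_proj.
    eapply adj_unique. apply adj_spec. exists (fun z => adj M (pr y) (adj M (pr x) z)).
    apply comp_adj; apply adj_spec, lin_pr.
    apply comp_adj; apply adj_spec, lin_pr. }
  { intro S. apply Lin_ext. rewrite LI_proj.
    eapply adj_unique. apply adj_spec, lin_pr.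
    apply (sup_adj S). apply LJ_lub.
    intro y. eapply is_lub_ext; [|apply LJ_lub]. intro z. split.
    - intros [h [[f [Sf ->]] ->]]. rewrite LI_proj. eauto.
    - intros [f [Sf ->]]. exists (LI f). split. exists f; auto. rewrite LI_proj. reflexivity. }
  split.
  { intros x y. apply Lin_ext. rewrite !(LN_proj _ t Ht), !LM_proj, (LNN_proj y t Ht), sas_top; auto. }
  split.
  { intro S. apply Lin_ext. rewrite !(LN_proj _ t Ht). f_equal. f_equal.
    apply LJ_eq. eapply is_lub_ext; [|apply LJ_lub]. intro z. split.
    - intros [f [Sf ->]]. exists (LN (LN f)). split. exists f; auto.
      rewrite (LNN_proj f t Ht), sas_top; auto.
    - intros [h [[f [Sf ->]] ->]]. rewrite (LNN_proj f t Ht), sas_top; eauto. }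
  split.
  { intro x. apply Lin_ext. rewrite LI_proj, (LN_proj _ t Ht).
    eapply adj_unique. apply adj_spec. exists (sas M (oc (pr x t))). apply sas_lin. apply sas_lin. }
  { intros x y. apply Lin_ext. rewrite (LNN_proj _ t Ht), (LN_proj _ t Ht), LM_proj, (LNN_proj _ t Ht).
    rewrite (LJ_eq _ t (jn M (pr (LN x) t) (pr (LN (LJ (pair2 (LN x) y))) t))).
    2:{ eapply is_lub_ext; [|apply jn_is_lub, HM]. intro z. split.
        - intros [-> | ->]; eauto using or_introl, or_intror.
          exists (LN x); split; [left|]; reflexivity.
          exists (LN (LJ (pair2 (LN x) y))); split; [right|]; reflexivity.
        - intros [h [[-> | ->] ->]]; [left|right]; reflexivity. }
    rewrite (LN_top _ t Ht), (LN_top _ t Ht).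
    rewrite (LJ_eq _ t (jn M (pr (LN x) t) (pr y t))).
    2:{ eapply is_lub_ext; [|apply jn_is_lub, HM]. intro z. split.
        - intros [-> | ->].
          exists (LN x); split; [left|]; reflexivity.
          exists y; split; [right|]; reflexivity.
        - intros [h [[-> | ->] ->]]; [left|right]; reflexivity. }
    rewrite (LN_top _ t Ht). f_equal.
    rewrite (oc_jn M HM), !(ocK M HM). reflexivity. }
Qed.

End LinS.

Lemma pred_ext {A : Type} (P Q : A -> Prop) : (forall x, P x <-> Q x) -> P = Q.
Proof. intro H. extensionality x. apply propositional_extensionality, H. Qed.

Lemma sig_ext {A : Type} {P : A -> Prop} (a b : {x | P x}) : proj1_sig a = proj1_sig b -> a = b.
Proof. destruct a, b; simpl. intros ->. f_equal. apply proof_irrelevance. Qed.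

Section IDAth.
Variable K : IDAstr.
Hypothesis HK : is_IDA K.
Local Notation J := (ijoin K).
Local Notation "x * y" := (imul K x y).
Local Notation "~~ x" := (ineg K x) (at level 35, right associativity).
Local Notation le := (ile K).
Let HQ : is_IQuantale K := proj1 HK.
Let HA := proj2 HK.
Ltac dq := let H := fresh in pose proof HQ as H; unfold is_IQuantale in H;
  destruct H as [q1 [q2 [q3 [q4 [q5 [q6 [q7 [q8 [q9 [q10 [q11 [q12 q13]]]]]]]]]]]].
Ltac da := let H := fresh in pose proof HA as H; destruct H as [a1 [a2 [a3 a4]]].

Lemma ile_refl x : le x x. Proof. dq; apply q1. Qed.
Lemma ile_antisym x y : le x y -> le y x -> x = y. Proof. dq; apply q2. Qed.
Lemma ile_trans x y z : le x y -> le y z -> le x z. Proof. dq; apply q3. Qed.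
Lemma J_ub S x : S x -> le x (J S). Proof. dq; apply q4. Qed.
Lemma J_lub S u : (forall x, S x -> le x u) -> le (J S) u. Proof. dq; apply q5. Qed.
Lemma mulA x y z : (x * y) * z = x * (y * z). Proof. dq; apply q6. Qed.
Lemma mul1l x : iunit K * x = x. Proof. dq; apply q7. Qed.
Lemma mul1r x : x * iunit K = x. Proof. dq; apply q8. Qed.
Lemma mulJr x S : x * J S = J (imageP (fun y => x * y) S). Proof. dq; apply q9. Qed.
Lemma mulJl S y : J S * y = J (imageP (fun x => x * y) S). Proof. dq; apply q10. Qed.
Lemma invK x : iinv K (iinv K x) = x. Proof. dq; apply q11. Qed.
Lemma invM x y : iinv K (x * y) = iinv K y * iinv K x. Proof. dq; apply q12. Qed.
Lemma invJ S : iinv K (J S) = J (imageP (iinv K) S). Proof. dq; apply q13. Qed.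
Lemma ax1 x y : ~~ (x * ~~ ~~ y) = ~~ (x * y). Proof. da; apply a1. Qed.
Lemma ax2 S : ~~ (J (imageP (fun x => ~~ ~~ x) S)) = ~~ (J S). Proof. da; apply a2. Qed.
Lemma ax3 x : iinv K (~~ x) = ~~ x. Proof. da; apply a3. Qed.
Lemma ax4 x y : ~~ ~~ (~~ ~~ x * y) = ~~ (J (pair2 (~~ x) (~~ (J (pair2 (~~ x) y))))).
Proof. da; apply a4. Qed.

Lemma J_eq S s : (forall x, S x -> le x s) -> (forall u, (forall x, S x -> le x u) -> le s u) -> J S = s.
Proof. intros H1 H2. apply ile_antisym. apply J_lub; auto. apply H2. intros; apply J_ub; auto. Qed.
Lemma J_single x : J (fun c => c = x) = x.
Proof. apply J_eq. intros c ->; apply ile_refl. intros u H; apply H; reflexivity. Qed.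
Lemma J_big (I : Type) (P : I -> Prop) (Q : I -> icar K -> Prop) :
  J (fun y => exists i, P i /\ Q i y) = J (fun y => exists i, P i /\ y = J (Q i)).
Proof.
  apply ile_antisym.
  - apply J_lub. intros x [i [Pi Qx]]. apply ile_trans with (J (Q i)). apply J_ub, Qx.
    apply J_ub. eauto.
  - apply J_lub. intros x [i [Pi ->]]. apply J_lub. intros y Qy. apply J_ub. eauto.
Qed.
Lemma nnn x : ~~ ~~ ~~ x = ~~ x.
Proof.
  pose proof (ax2 (fun c => c = x)) as H.
  assert (E : J (imageP (fun x => ~~ ~~ x) (fun c => c = x)) = ~~ ~~ x).
  { rewrite <- (J_single (~~ ~~ x)). f_equal. apply pred_ext. intro c. unfold imageP. split.
    - intros [y [-> ->]]. reflexivity.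
    - intros ->. eauto. }
  rewrite E, J_single in H. exact H.
Qed.
Lemma J_pair_le x y : le x y -> J (pair2 x y) = y.
Proof. intro H. exact H. Qed.
Lemma J_pair_ub1 x y : le x (J (pair2 x y)). Proof. apply J_ub. left; auto. Qed.
Lemma J_pair_ub2 x y : le y (J (pair2 x y)). Proof. apply J_ub. right; auto. Qed.
Lemma imageP_pair {B : Type} (f : icar K -> B) x y : imageP f (pair2 x y) = pair2 (f x) (f y).
Proof. apply pred_ext. intro z. unfold imageP, pair2. split.
  - intros [w [[-> | ->] ->]]; auto.
  - intros [-> | ->]; eauto. Qed.
Lemma J_mul S U : J S * J U = J (fun c => exists s u, S s /\ U u /\ c = s * u).
Proof.
  transitivity (J (fun c => exists s, S s /\ (fun s c => exists u, U u /\ c = s * u) s c)).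
  2:{ f_equal. apply pred_ext. intro c. split.
      - intros [s [Ss [u [Uu ->]]]]. eauto.
      - intros [s [u [Ss [Uu ->]]]]. eauto. }
  rewrite J_big. rewrite mulJl. f_equal. apply pred_ext. intro c. unfold imageP. split.
  - intros [s [Ss ->]]. exists s. split; auto. rewrite mulJr. reflexivity.
  - intros [s [Ss ->]]. exists s. split; auto. rewrite mulJr. reflexivity.
Qed.
End IDAth.

Section PsetS.
Variable K : IDAstr.
Hypothesis HK : is_IDA K.
Variable L : icar K -> Prop.
Hypothesis HLt : forall k, tests K k -> L k.
Hypothesis HLm : forall x y, L x -> L y -> L (imul K x y).
Hypothesis HLi : forall x, L x -> L (iinv K x).
Hypothesis HLu : L (iunit K).
Local Notation J := (ijoin K).
Local Notation "x * y" := (imul K x y).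
Local Notation "~~ x" := (ineg K x) (at level 35, right associativity).
Local Notation P := (Pset K L).

Definition pj (A : icar P) : icar K -> Prop := imageP (@proj1_sig _ _) A.
Definition sg (z : icar K) : icar P := fun c => proj1_sig c = z.

Lemma Lneg x : L (~~ x). Proof. apply HLt. exists x. reflexivity. Qed.

Lemma pj_sg z : L z -> pj (sg z) = fun c => c = z.
Proof.
  intro Lz. apply pred_ext. intro c. unfold pj, sg, imageP. split.
  - intros [y [Hy ->]]. exact Hy.
  - intros ->. exists (exist _ z Lz). auto.
Qed.
Lemma Jpj_sg z : L z -> J (pj (sg z)) = z.
Proof. intro Lz. rewrite pj_sg by exact Lz. apply J_single, HK. Qed.

Lemma negP_eq A : ineg P A = sg (~~ J (pj A)). Proof. reflexivity. Qed.
Lemma Jpj_neg A : J (pj (ineg P A)) = ~~ J (pj A).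
Proof. rewrite negP_eq. apply Jpj_sg, Lneg. Qed.

Lemma negP_congr A B : ~~ J (pj A) = ~~ J (pj B) -> ineg P A = ineg P B.
Proof. intro E. rewrite !negP_eq, E. reflexivity. Qed.

Lemma ile_P A B : ile P A B <-> forall c, A c -> B c.
Proof.
  unfold ile. simpl. split.
  - intros H c Ac. rewrite <- H. exists A. split; [left|]; auto.
  - intro H. apply pred_ext. intro c. split.
    + intros [X [[-> | ->] Xc]]; auto.
    + intro Bc. exists B. split; [right|]; auto.
Qed.

Lemma pj_mul A B : pj (imul P A B) = fun y => exists a b, pj A a /\ pj B b /\ y = a * b.
Proof.
  apply pred_ext. intro y. unfold pj, imageP. simpl. split.
  - intros [c [[a [b [Aa [Bb E]]]] ->]]. exists (proj1_sig a), (proj1_sig b).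
    split; [eauto|split; [eauto|exact E]].
  - intros [a [b [[a' [Aa ->]] [[b' [Bb ->]] ->]]]].
    exists (exist _ _ (HLm _ _ (proj2_sig a') (proj2_sig b'))). simpl. split; auto.
    exists a', b'. auto.
Qed.
Lemma Jpj_mul A B : J (pj (imul P A B)) = J (pj A) * J (pj B).
Proof. rewrite pj_mul, J_mul by exact HK. reflexivity. Qed.

Lemma Jpj_join S : J (pj (ijoin P S)) = J (fun y => exists A, S A /\ y = J (pj A)).
Proof.
  rewrite <- (J_big K HK _ S (fun A => pj A)). f_equal. apply pred_ext. intro y.
  unfold pj, imageP. simpl. split.
  - intros [c [[A [SA Ac]] ->]]. eauto.
  - intros [A [SA [c [Ac ->]]]]. eauto.
Qed.

Lemma Jpj_inv A : J (pj (iinv P A)) = iinv K (J (pj A)).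
Proof.
  rewrite invJ by exact HK. f_equal. apply pred_ext. intro y. unfold pj, imageP. simpl. split.
  - intros [c [[a [Aa E]] ->]]. rewrite E. eauto.
  - intros [z [[a [Aa ->]] ->]].
    exists (exist _ _ (HLi _ (proj2_sig a))). simpl. split; eauto.
Qed.

Lemma Pset_IDA : is_IDA P.
Proof.
  split; [split|].
  { intro x. apply ile_P. auto. }
  split.
  { intros x y H1 H2. rewrite ile_P in H1, H2. apply pred_ext. split; auto. }
  split.
  { intros x y z H1 H2. rewrite ile_P in H1, H2 |- *. auto. }
  split.
  { intros S x Sx. apply ile_P. intros c xc. simpl. eauto. }
  split.
  { intros S u H. apply ile_P. intros c [A [SA Ac]]. apply (proj1 (ile_P _ _) (H A SA)), Ac. }
  split.
  { intros x y z. apply pred_ext. intro c. simpl. split.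
    - intros [d [c' [[a [b [xa [yb E1]]]] [zc E2]]]].
      exists a, (exist _ _ (HLm _ _ (proj2_sig b) (proj2_sig c'))). split; auto. split.
      + exists b, c'. auto.
      + simpl. rewrite E2, E1. apply mulA, HK.
    - intros [a [d [xa [[b [c' [yb [zc E1]]]] E2]]]].
      exists (exist _ _ (HLm _ _ (proj2_sig a) (proj2_sig b))), c'. split; [|split; auto].
      + exists a, b. auto.
      + simpl. rewrite E2, E1. symmetry. apply mulA, HK. }
  split.
  { intro x. apply pred_ext. intro c. simpl. split.
    - intros [a [b [Ea [xb E]]]]. rewrite Ea, mul1l in E by exact HK.
      replace c with b; auto. apply sig_ext. auto.
    - intro xc. exists (exist _ _ HLu), c. simpl. split; auto. split; auto.
      symmetry. apply mul1l, HK. }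
  split.
  { intro x. apply pred_ext. intro c. simpl. split.
    - intros [a [b [xa [Eb E]]]]. rewrite Eb, mul1r in E by exact HK.
      replace c with a; auto. apply sig_ext. auto.
    - intro xc. exists c, (exist _ _ HLu). simpl. split; auto. split; auto.
      symmetry. apply mul1r, HK. }
  split.
  { intros x S. apply pred_ext. intro c. simpl. unfold imageP. split.
    - intros [a [b [xa [[B [SB Bb]] E]]]]. exists (imul P x B). split.
      + exists B. auto.
      + simpl. exists a, b. auto.
    - intros [A [[B [SB ->]] [a [b [xa [Bb E]]]]]]. exists a, b. split; auto. split; eauto. }
  split.
  { intros S y. apply pred_ext. intro c. simpl. unfold imageP. split.
    - intros [a [b [[B [SB Ba]] [yb E]]]]. exists (imul P B y). split.
      + exists B. auto.
      + simpl. exists a, b. auto.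
    - intros [A [[B [SB ->]] [a [b [Ba [yb E]]]]]]. exists a, b. split; eauto. }
  split.
  { intro x. apply pred_ext. intro c. simpl. split.
    - intros [a [[b [xb Ea]] Ec]].
      replace c with b; auto. apply sig_ext. rewrite Ec, Ea, invK by exact HK. reflexivity.
    - intro xc. exists (exist _ _ (HLi _ (proj2_sig c))). simpl. split.
      + exists c. auto.
      + rewrite invK by exact HK. reflexivity. }
  split.
  { intros x y. apply pred_ext. intro c. simpl. split.
    - intros [d [[a [b [xa [yb E1]]]] E2]].
      exists (exist _ _ (HLi _ (proj2_sig b))), (exist _ _ (HLi _ (proj2_sig a))). simpl.
      split; [eauto|split; [eauto|]]. rewrite E2, E1. apply invM, HK.
    - intros [b [a [[b' [yb E1]] [[a' [xa E2]] E3]]]].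
      exists (exist _ _ (HLm _ _ (proj2_sig a') (proj2_sig b'))). simpl. split.
      + exists a', b'. auto.
      + rewrite E3, E1, E2, invM by exact HK. reflexivity. }
  { intro S. apply pred_ext. intro c. simpl. unfold imageP. split.
    - intros [a [[A [SA Aa]] E]]. exists (iinv P A). split.
      + exists A. auto.
      + simpl. eauto.
    - intros [B [[A [SA ->]] [a [Aa E]]]]. simpl. eauto. }
  split.
  { intros x y. apply negP_congr. rewrite !Jpj_mul, !Jpj_neg.
    apply ax1, HK. }
  split.
  { intros S. apply negP_congr. rewrite !Jpj_join.
    rewrite <- (ax2 K HK (fun y => exists A, S A /\ y = J (pj A))). f_equal. f_equal.
    apply pred_ext. intro y. unfold imageP. split.
    - intros [A [[B [SB ->]] ->]]. exists (J (pj B)). split; eauto.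
      rewrite !Jpj_neg. reflexivity.
    - intros [z [[A [SA ->]] ->]]. exists (ineg P (ineg P A)). split. eauto.
      rewrite !Jpj_neg. reflexivity. }
  split.
  { intro x. apply pred_ext. intro c. rewrite negP_eq. simpl. unfold sg. split.
    - intros [a [Ea Ec]]. rewrite Ec, Ea. apply ax3, HK.
    - intro Ec. exists (exist _ _ (Lneg (J (pj x)))). simpl. split; auto.
      rewrite Ec. symmetry. apply ax3, HK. }
  { intros x y. apply negP_congr. rewrite !Jpj_neg, !Jpj_join, Jpj_mul, !Jpj_neg.
    rewrite (ax4 K HK). f_equal. f_equal.
    apply pred_ext. intro z. unfold pair2. split.
    - intros [-> | ->].
      + exists (ineg P x). split; [left; auto|]. symmetry. apply Jpj_neg.
      + exists (ineg P (ijoin P (pair2 (ineg P x) y))). split; [right; auto|].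
        rewrite Jpj_neg. f_equal. rewrite Jpj_join. f_equal. apply pred_ext. intro w. split.
        * intros [-> | ->]. exists (ineg P x). split; [left; auto|symmetry; apply Jpj_neg].
          exists y. split; [right|]; auto.
        * intros [B [[-> | ->] ->]]. left. apply Jpj_neg. right. reflexivity.
    - intros [A [[-> | ->] ->]].
      + left. apply Jpj_neg.
      + right. rewrite Jpj_neg. f_equal. rewrite Jpj_join. f_equal. apply pred_ext. intro w. split.
        * intros [B [[-> | ->] ->]]. left. apply Jpj_neg. right. reflexivity.
        * intros [-> | ->]. exists (ineg P x). split; [left; auto|symmetry; apply Jpj_neg].
          exists y. split; [right|]; auto. }
Qed.
End PsetS.

Lemma COL_transfer (M N : OLstr) (g : ocar M -> ocar N) :
  is_COL M -> is_COL_mor M N g -> is_COL N.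
Proof.
  intros HM [[ginj gsurj] [gle goc]].
  assert (Hlub : forall S s, is_lub M (fun x => S (g x)) s -> is_lub N S (g s)).
  { intros S s [H1 H2]. split.
    - intros y Sy. destruct (gsurj y) as [x <-]. apply gle, H1, Sy.
    - intros u Hu. destruct (gsurj u) as [v <-]. apply gle, H2. intros x Sx. apply gle, Hu, Sx. }
  assert (Hglb : forall S s, is_glb N S (g s) -> is_glb M (fun x => S (g x)) s).
  { intros S s [H1 H2]. split.
    - intros x Sx. apply gle, H1, Sx.
    - intros u Hu. apply gle, H2. intros y Sy. destruct (gsurj y) as [x <-]. apply gle, Hu, Sy. }
  assert (Hlub' : forall S s, is_lub N S (g s) -> is_lub M (fun x => S (g x)) s).
  { intros S s [H1 H2]. split.
    - intros x Sx. apply gle, H1, Sx.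
    - intros u Hu. apply gle, H2. intros y Sy. destruct (gsurj y) as [x <-]. apply gle, Hu, Sy. }
  assert (Hp : forall a b x, pair2 (g a) (g b) (g x) <-> pair2 a b x).
  { intros a b x. unfold pair2. split; intros [E|E]; [left|right|left|right]; auto; subst; auto. }
  split.
  { intro y. destruct (gsurj y) as [x <-]. apply gle, (le_refl M HM). }
  split.
  { intros y z. destruct (gsurj y) as [x <-]. destruct (gsurj z) as [w <-].
    intros H1 H2. f_equal. apply (le_antisym M HM); apply gle; auto. }
  split.
  { intros a b c. destruct (gsurj a) as [x <-]. destruct (gsurj b) as [y <-]. destruct (gsurj c) as [z <-].
    intros H1 H2. apply gle. eapply (le_trans M HM); apply gle; eauto. }
  split.
  { intro S. destruct (lub_ex M HM (fun x => S (g x))) as [s Hs]. exists (g s). apply Hlub, Hs. }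
  split.
  { intro y. destruct (gsurj y) as [x <-]. rewrite <- !goc, (ocK M HM). reflexivity. }
  split.
  { intros a b. destruct (gsurj a) as [x <-]. destruct (gsurj b) as [y <-].
    rewrite <- !goc, <- !gle. apply (oc_anti M HM). }
  split.
  { intros a c. destruct (gsurj a) as [x <-]. destruct (gsurj c) as [z <-].
    rewrite <- !goc, <- !gle. intros H1 H2 w. destruct (gsurj w) as [v <-]. apply gle.
    destruct HM as [_ [_ [_ [_ [_ [_ [H _]]]]]]]. eapply H; eauto. }
  split.
  { intros a c. destruct (gsurj a) as [x <-]. destruct (gsurj c) as [z <-].
    rewrite <- !goc, <- !gle. intros H1 H2 w. destruct (gsurj w) as [v <-]. apply gle.
    destruct HM as [_ [_ [_ [_ [_ [_ [_ [H _]]]]]]]]. eapply H; eauto. }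
  { intros a b m j. destruct (gsurj a) as [x <-]. destruct (gsurj b) as [y <-].
    destruct (gsurj m) as [mm <-]. destruct (gsurj j) as [jj <-].
    rewrite <- !goc, <- !gle. intros H1 H2 H3. f_equal.
    apply Hglb in H2. apply Hlub' in H3.
    eapply (oml M HM x y mm jj H1).
    - destruct H2 as [A1 A2]. split.
      + intros z Hz. apply A1, Hp, Hz.
      + intros u Hu. apply A2. intros z Hz. apply Hu, Hp, Hz.
    - destruct H3 as [A1 A2]. split.
      + intros z Hz. apply A1, Hp, Hz.
      + intros u Hu. apply A2. intros z Hz. apply Hu, Hp, Hz. }
Qed.

Section GammaS.
Variable T : TFun.
Hypothesis HT1 : T1 T.
Hypothesis HT3 : T3 T.
Variable M : OLstr.
Hypothesis HM : is_COL M.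
Local Notation L := (T (Lin M)).
Local Notation G := (Gamma T M).
Local Notation pr := (@proj1_sig _ _).
Local Notation oc := (oc M).
Local Notation LJ := (ijoin (Lin M)).
Local Notation LN := (ineg (Lin M)).

Lemma LinI : is_IDA (Lin M). Proof. apply Lin_IDA, HM. Qed.
Lemma Lt k : tests (Lin M) k -> L k. Proof. apply (HT1 _ LinI). Qed.
Lemma Lm x y : L x -> L y -> L (imul (Lin M) x y). Proof. apply (HT1 _ LinI). Qed.
Lemma Li x : L x -> L (iinv (Lin M) x). Proof. apply (HT1 _ LinI). Qed.
Lemma Lu : L (iunit (Lin M)). Proof. apply (HT1 _ LinI). Qed.

Lemma Gamma_IDA : is_IDA G.
Proof. apply (Pset_IDA (Lin M) LinI L Lt Lm Li Lu). Qed.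

Lemma piL_top m t : is_top M t -> pr (piL M m) t = m.
Proof. intro Ht. rewrite piL_proj by exact HM. apply sas_top; auto. Qed.
Lemma piL_inj m n : piL M m = piL M n -> m = n.
Proof.
  intro E. destruct (top_ex M HM) as [t Ht].
  rewrite <- (piL_top m t Ht), <- (piL_top n t Ht), E. reflexivity.
Qed.
Lemma LN_piL' m : LN (piL M m) = piL M (oc m).
Proof. destruct (top_ex M HM) as [t Ht]. rewrite (LN_piL M HM _ t Ht), piL_top; auto. Qed.
Lemma piL_test m : tests (Lin M) (piL M m).
Proof. exists (piL M (oc m)). rewrite LN_piL', (ocK M HM). reflexivity. Qed.
Lemma piL_L m : L (piL M m). Proof. apply Lt, piL_test. Qed.

Lemma sg_inj f g : L f -> L g -> singL T M f = singL T M g -> f = g.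
Proof.
  intros Lf Lg E. assert (H : singL T M f (exist _ f Lf)) by reflexivity.
  rewrite E in H. exact H.
Qed.
Lemma singL_sg f : singL T M f = sg (Lin M) L f. Proof. reflexivity. Qed.

Lemma negG A t : is_top M t -> ineg G A = singL T M (piL M (oc (pr (LJ (pj (Lin M) L A)) t))).
Proof. intro Ht. unfold Gamma. rewrite negP_eq. rewrite (LN_piL M HM _ t Ht). reflexivity. Qed.

Lemma JLin_pair f g x : pr (LJ (pair2 f g)) x = jn M (pr f x) (pr g x).
Proof.
  apply LJ_eq; [exact HM|]. eapply is_lub_ext; [|apply jn_is_lub, HM]. intro z. split.
  - intros [-> | ->]. exists f; split; [left|]; auto. exists g; split; [right|]; auto.
  - intros [h [[-> | ->] ->]]; [left|right]; auto.
Qed.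

Lemma Jpj_sgG f : L f -> ijoin (Lin M) (pj (Lin M) L (singL T M f)) = f.
Proof. intro Lf. apply (Jpj_sg (Lin M) LinI L _ Lf). Qed.

Lemma negG_pi m : ineg G (singL T M (piL M m)) = singL T M (piL M (oc m)).
Proof.
  destruct (top_ex M HM) as [t Ht]. rewrite (negG _ t Ht), Jpj_sgG by apply piL_L.
  rewrite piL_top; auto.
Qed.

Lemma mu_test m : tests G (singL T M (piL M m)).
Proof. exists (singL T M (piL M (oc m))). rewrite negG_pi, (ocK M HM). reflexivity. Qed.

Lemma G_tests A : tests G A -> exists m, A = singL T M (piL M m).
Proof.
  intros [B ->]. destruct (top_ex M HM) as [t Ht]. rewrite (negG _ t Ht). eauto.
Qed.

Lemma JG_pair_pi m n : ijoin (Lin M) (pj (Lin M) L (ijoin G (pair2 (singL T M (piL M m)) (singL T M (piL M n)))))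
   = LJ (pair2 (piL M m) (piL M n)).
Proof.
  unfold Gamma. rewrite (Jpj_join (Lin M) LinI L). f_equal. apply pred_ext. intro y. split.
  - intros [A [[-> | ->] ->]]; rewrite Jpj_sgG by apply piL_L; [left|right]; auto.
  - intros [-> | ->]; [exists (singL T M (piL M m))|exists (singL T M (piL M n))];
      (split; [unfold pair2; auto|rewrite Jpj_sgG by apply piL_L; reflexivity]).
Qed.

Lemma tjoin_G_pi m n : tjoin G (pair2 (singL T M (piL M m)) (singL T M (piL M n))) = singL T M (piL M (jn M m n)).
Proof.
  destruct (top_ex M HM) as [t Ht]. unfold tjoin.
  assert (E1 : ineg G (ijoin G (pair2 (singL T M (piL M m)) (singL T M (piL M n))))
               = singL T M (piL M (oc (jn M m n)))).
  { rewrite (negG _ t Ht), JG_pair_pi, JLin_pair, !piL_top by exact Ht. reflexivity. }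
  rewrite E1, negG_pi, (ocK M HM). reflexivity.
Qed.

Definition muG (m : ocar M) : ocar (Psi G) := exist (tests G) (singL T M (piL M m)) (mu_test m).

Lemma jn_eq_le m n : jn M m n = n <-> ole M m n.
Proof.
  split.
  - intro E. rewrite <- E. apply jn_l, HM.
  - intro H. apply (jn_char M HM); auto. apply (le_refl M HM).
Qed.

Lemma muG_mor : is_COL_mor M (Psi G) muG.
Proof.
  split; [split|split].
  - intros m n E. apply (f_equal (@proj1_sig _ _)) in E. simpl in E.
    apply piL_inj, sg_inj; auto using piL_L.
  - intros [A HA]. destruct (G_tests A HA) as [m ->]. exists m. apply sig_ext. reflexivity.
  - intros m n. simpl. unfold tle. rewrite tjoin_G_pi. split.
    + intro H. rewrite <- jn_eq_le in H. rewrite H. reflexivity.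
    + intro H. rewrite <- jn_eq_le. apply piL_inj, sg_inj; auto using piL_L.
  - intro m. apply sig_ext. simpl. symmetry. apply negG_pi.
Qed.

Lemma PsiG_COL : is_COL (Psi G).
Proof. exact (COL_transfer M (Psi G) muG HM muG_mor). Qed.

Lemma bullet_G f m : L f ->
  bullet G (singL T M f) (singL T M (piL M m)) = singL T M (piL M (pr f m)).
Proof.
  intro Lf. destruct (top_ex M HM) as [t Ht]. unfold bullet.
  assert (E : ineg G (imul G (singL T M f) (singL T M (piL M m))) = singL T M (piL M (oc (pr f m)))).
  { rewrite (negG _ t Ht). unfold Gamma.
    rewrite (Jpj_mul (Lin M) LinI L Lm), !Jpj_sgG by auto using piL_L.
    rewrite LM_proj by exact HM. rewrite piL_top by exact Ht. reflexivity. }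
  rewrite E, negG_pi, (ocK M HM). reflexivity.
Qed.

Lemma Gamma_TODA : is_TODA T G.
Proof.
  split; [apply Gamma_IDA|]. split; [apply PsiG_COL|]. split.
  { intros A HT Hm Hi HJ x.
    assert (E : x = ijoin G (fun B => exists c, x c /\ B = singL T M (pr c))).
    { apply pred_ext. intro c. simpl. split.
      - intro xc. exists (singL T M (pr c)). split; eauto. reflexivity.
      - intros [B [[c' [xc' ->]] Bc]]. replace c with c'; auto. apply sig_ext. symmetry. exact Bc. }
    rewrite E. apply HJ. intros B [c [xc ->]]. apply HT. apply (HT3 M HM). apply proj2_sig. }
  split.
  { intros S U HS HU. split.
    - intro E.
      assert (Hs : forall (S U : icar G -> Prop), (forall x, S x -> T G x) -> (forall x, U x -> T G x) ->
                 ijoin G S = ijoin G U -> forall x, S x -> U x).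
      { clear S U HS HU E. intros S U HS HU E B SB.
        destruct ((proj1 (proj2 (proj2 (HT3 M HM)))) B (HS B SB)) as [f [Lf ->]].
        assert (H : ijoin G S (exist _ f Lf)) by (exists (singL T M f); split; auto; reflexivity).
        rewrite E in H. destruct H as [B' [UB' B'c]].
        destruct ((proj1 (proj2 (proj2 (HT3 M HM)))) B' (HU B' UB')) as [f' [Lf' ->]].
        simpl in B'c. unfold singL in B'c. simpl in B'c. subst f'. exact UB'. }
      intro x. split; [apply (Hs S U)|apply (Hs U S)]; auto.
    - intro H. f_equal. apply pred_ext. exact H. }
  { intros s t Hs Ht. split.
    - intros ->. intros w _. reflexivity.
    - intro Heq.
      destruct ((proj1 (proj2 (proj2 (HT3 M HM)))) s Hs) as [f [Lf ->]].
      destruct ((proj1 (proj2 (proj2 (HT3 M HM)))) t Ht) as [g [Lg ->]].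
      f_equal. apply (Lin_ext M). extensionality m.
      specialize (Heq _ (mu_test m)). rewrite !bullet_G in Heq by auto.
      apply piL_inj, sg_inj; auto using piL_L. }
Qed.
End GammaS.

Section ConjS.
Variables M N : OLstr.
Hypothesis HM : is_COL M.
Hypothesis HN : is_COL N.
Variable k : ocar M -> ocar N.
Hypothesis Hk : is_COL_mor M N k.
Local Notation pr := (@proj1_sig _ _).

Definition kinv (y : ocar N) : ocar M :=
  proj1_sig (constructive_indefinite_description _ (proj2 (proj1 Hk) y)).
Lemma k_kinv y : k (kinv y) = y.
Proof. unfold kinv. destruct constructive_indefinite_description. simpl. exact e. Qed.
Lemma kinv_k x : kinv (k x) = x.
Proof. apply (proj1 (proj1 Hk)). apply k_kinv. Qed.
Lemma k_le x y : ole M x y <-> ole N (k x) (k y). Proof. apply (proj1 (proj2 Hk)). Qed.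
Lemma k_oc x : k (oc M x) = oc N (k x). Proof. apply (proj2 (proj2 Hk)). Qed.
Lemma k_inj x y : k x = k y -> x = y. Proof. apply (proj1 (proj1 Hk)). Qed.

Lemma kinv_mor : is_COL_mor N M kinv.
Proof.
  split; [split|split].
  - intros x y E. rewrite <- (k_kinv x), <- (k_kinv y), E. reflexivity.
  - intro x. exists (k x). apply kinv_k.
  - intros x y. rewrite k_le, !k_kinv. tauto.
  - intro y. apply k_inj. rewrite k_oc, !k_kinv. reflexivity.
Qed.

Lemma k_lub S s : is_lub M S s -> is_lub N (fun y => exists x, S x /\ y = k x) (k s).
Proof.
  intros [H1 H2]. split.
  - intros y [x [Sx ->]]. apply k_le, H1, Sx.
  - intros u Hu. rewrite <- (k_kinv u). apply k_le, H2. intros x Sx. apply k_le.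
    rewrite k_kinv. apply Hu. eauto.
Qed.

Lemma k_jn a b : k (jn M a b) = jn N (k a) (k b).
Proof.
  symmetry. apply (jn_char N HN).
  - apply k_le, jn_l, HM.
  - apply k_le, jn_r, HM.
  - intros z H1 H2. rewrite <- (k_kinv z) in *. apply k_le. apply k_le in H1. apply k_le in H2.
    apply jn_lub; auto.
Qed.
Lemma k_mt a b : k (mt M a b) = mt N (k a) (k b).
Proof.
  symmetry. apply (mt_char N HN).
  - apply k_le, mt_l, HM.
  - apply k_le, mt_r, HM.
  - intros z H1 H2. rewrite <- (k_kinv z) in *. apply k_le. apply k_le in H1. apply k_le in H2.
    apply mt_glb; auto.
Qed.
Lemma k_sas m x : k (sas M m x) = sas N (k m) (k x).
Proof. unfold sas. rewrite k_mt, k_jn, k_oc. reflexivity. Qed.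
Lemma k_top t : is_top M t -> is_top N (k t).
Proof. intros Ht y. rewrite <- (k_kinv y). apply k_le, Ht. Qed.

Definition conjf (f : ocar M -> ocar M) : ocar N -> ocar N := fun y => k (f (kinv y)).
Lemma conj_adj f g : is_adjoint M f g -> is_adjoint N (conjf f) (conjf g).
Proof.
  intros H x y. unfold conjf.
  rewrite <- (k_kinv y) at 1. rewrite <- k_oc, <- k_le, (H (kinv x) (kinv y)).
  rewrite <- (k_kinv x) at 2. rewrite <- k_oc, <- k_le. tauto.
Qed.
Lemma conj_lin f : linear M f -> linear N (conjf f).
Proof. intros [g Hg]. exists (conjf g). apply conj_adj, Hg. Qed.

Definition conjL (a : LinT M) : LinT N := mkLin N (conjf (pr a)).
Lemma conjL_proj a : pr (conjL a) = conjf (pr a).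
Proof. apply mkLin_proj. apply conj_lin, lin_pr. Qed.

Lemma conjL_char (a : LinT M) (c : LinT N) :
  (forall x, pr c (k x) = k (pr a x)) <-> c = conjL a.
Proof.
  split.
  - intro H. apply Lin_ext. rewrite conjL_proj. extensionality y. unfold conjf.
    rewrite <- H, k_kinv. reflexivity.
  - intros -> x. rewrite conjL_proj. unfold conjf. rewrite kinv_k. reflexivity.
Qed.

Lemma conjL_pi m : conjL (piL M m) = piL N (k m).
Proof.
  apply Lin_ext. rewrite conjL_proj, !piL_proj by assumption. extensionality y. unfold conjf.
  rewrite k_sas, k_kinv. reflexivity.
Qed.

Lemma conjL_mor : is_IDA_mor (Lin M) (Lin N) conjL.
Proof.
  split; [|split; [|split; [|split]]].
  - intro S. apply Lin_ext. rewrite conjL_proj. extensionality y. unfold conjf. symmetry.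
    apply (LJ_eq N HN). eapply is_lub_ext; [|apply k_lub, (LJ_lub M HM)].
    intro z. split.
    + intros [x [[f [Sf ->]] ->]]. exists (conjL f). split. exists f; auto.
      rewrite conjL_proj. reflexivity.
    + intros [h [[f [Sf ->]] ->]]. rewrite conjL_proj. unfold conjf. eauto.
  - intros a b. apply Lin_ext. rewrite conjL_proj, (LM_proj M a b), (LM_proj N), !conjL_proj.
    extensionality y. unfold conjf. rewrite kinv_k. reflexivity.
  - intro a. apply Lin_ext. rewrite conjL_proj, (LI_proj M HM a), (LI_proj N HN), conjL_proj.
    eapply (adj_unique N HN). apply conj_adj, adj_spec, lin_pr. apply adj_spec, conj_lin, lin_pr.
  - apply Lin_ext. rewrite conjL_proj, (LU_proj M), (LU_proj N). extensionality y. unfold conjf.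
    apply k_kinv.
  - intro a. destruct (top_ex M HM) as [t Ht].
    rewrite (LN_piL M HM a t Ht), (LN_piL N HN _ (k t) (k_top t Ht)), conjL_pi.
    rewrite conjL_proj. unfold conjf. rewrite kinv_k, k_oc. reflexivity.
Qed.

End ConjS.

Lemma conjL_inv (M N : OLstr) (HM : is_COL M) (HN : is_COL N) k (Hk : is_COL_mor M N k) (a : LinT N) :
  conjL M N k Hk (conjL N M (kinv M N k Hk) (kinv_mor M N k Hk) a) = a.
Proof.
  apply Lin_ext. rewrite !conjL_proj; auto using kinv_mor. extensionality y. unfold conjf.
  rewrite kinv_k, k_kinv. reflexivity.
Qed.

Section LiftS.
Variables K1 K2 : IDAstr.
Hypothesis HK1 : is_IDA K1.
Hypothesis HK2 : is_IDA K2.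
Variable L1 : icar K1 -> Prop.
Variable L2 : icar K2 -> Prop.
Hypothesis HLt1 : forall k, tests K1 k -> L1 k.
Hypothesis HLm1 : forall x y, L1 x -> L1 y -> L1 (imul K1 x y).
Hypothesis HLi1 : forall x, L1 x -> L1 (iinv K1 x).
Hypothesis HLu1 : L1 (iunit K1).
Variable phi : icar K1 -> icar K2.
Hypothesis Hphi : is_IDA_mor K1 K2 phi.
Hypothesis HphiL : forall x, L1 x -> L2 (phi x).
Hypothesis phi_inj : forall x y, phi x = phi y -> x = y.
Variable psi : icar K2 -> icar K1.
Hypothesis HpsiL : forall y, L2 y -> L1 (psi y).
Hypothesis phi_psi : forall y, L2 y -> phi (psi y) = y.

Definition liftP (A : icar (Pset K1 L1)) : icar (Pset K2 L2) :=
  fun c => exists a, A a /\ proj1_sig c = phi (proj1_sig a).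

Lemma phiJ S : phi (ijoin K1 S) = ijoin K2 (imageP phi S). Proof. apply Hphi. Qed.
Lemma phiM x y : phi (imul K1 x y) = imul K2 (phi x) (phi y). Proof. apply Hphi. Qed.
Lemma phiI x : phi (iinv K1 x) = iinv K2 (phi x). Proof. apply Hphi. Qed.
Lemma phiU : phi (iunit K1) = iunit K2. Proof. apply Hphi. Qed.
Lemma phiN x : phi (ineg K1 x) = ineg K2 (phi x). Proof. apply Hphi. Qed.

Lemma lift_el (a : {x | L1 x}) : {y | L2 y}.
Proof. exists (phi (proj1_sig a)). apply HphiL, proj2_sig. Defined.

Lemma Jpj_lift A : ijoin K2 (pj K2 L2 (liftP A)) = phi (ijoin K1 (pj K1 L1 A)).
Proof.
  rewrite phiJ. f_equal. apply pred_ext. intro y. unfold pj, imageP, liftP. split.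
  - intros [c [[a [Aa E]] ->]]. exists (proj1_sig a). split; eauto.
  - intros [z [[a [Aa ->]] ->]]. exists (lift_el a). simpl. split; eauto.
Qed.

Lemma lift_TODA_mor : is_TODA_mor (Pset K1 L1) (Pset K2 L2) liftP.
Proof.
  split; [split; [|split; [|split; [|split]]]|split].
  - intro S. apply pred_ext. intro c. unfold liftP. simpl. unfold imageP. split.
    + intros [a [[A [SA Aa]] E]]. exists (liftP A). split; [eauto|]. exists a; auto.
    + intros [B [[A [SA ->]] [a [Aa E]]]]. exists a. split; eauto.
  - intros A B. apply pred_ext. intro c. unfold liftP. simpl. split.
    + intros [d [[a [b [Aa [Bb E1]]]] E2]]. exists (lift_el a), (lift_el b). simpl.
      split; [eauto|split; [eauto|]]. rewrite E2, E1. apply phiM.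
    + intros [a' [b' [[a [Aa E1]] [[b [Bb E2]] E3]]]].
      exists (exist _ _ (HLm1 _ _ (proj2_sig a) (proj2_sig b))). simpl. split.
      * exists a, b. auto.
      * rewrite E3, E1, E2, phiM. reflexivity.
  - intros A. apply pred_ext. intro c. unfold liftP. simpl. split.
    + intros [d [[a [Aa E1]] E2]]. exists (lift_el a). simpl. split; [eauto|].
      rewrite E2, E1. apply phiI.
    + intros [a' [[a [Aa E1]] E2]].
      exists (exist _ _ (HLi1 _ (proj2_sig a))). simpl. split; eauto.
      rewrite E2, E1, phiI. reflexivity.
  - apply pred_ext. intro c. unfold liftP. simpl. split.
    + intros [a [E1 E2]]. rewrite E2, E1. apply phiU.
    + intro E. exists (exist _ _ HLu1). simpl. split; auto. rewrite E. symmetry. apply phiU.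
  - intro A. rewrite (negP_eq K2 L2), Jpj_lift. apply pred_ext. intro c.
    unfold liftP. rewrite (negP_eq K1 L1). unfold sg. split.
    + intros [a [E1 E2]]. rewrite E2, E1. apply phiN.
    + intro E. assert (Lx : L1 (ineg K1 (ijoin K1 (pj K1 L1 A)))) by (apply HLt1; eexists; eauto).
      exists (exist _ _ Lx). simpl. split; auto. rewrite E. symmetry. apply phiN.
  - intros A B E. apply pred_ext. intro a. split.
    + intro Aa. assert (H : liftP A (lift_el a)) by (exists a; auto).
      rewrite E in H. destruct H as [b [Bb Eb]]. simpl in Eb.
      replace a with b; auto. apply sig_ext. symmetry. apply phi_inj, Eb.
    + intro Ba. assert (H : liftP B (lift_el a)) by (exists a; auto).
      rewrite <- E in H. destruct H as [b [Ab Eb]]. simpl in Eb.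
      replace a with b; auto. apply sig_ext. symmetry. apply phi_inj, Eb.
  - intro B. exists (fun a => B (lift_el a)). apply pred_ext. intro c. unfold liftP. split.
    + intros [a [Ba E]]. replace c with (lift_el a); auto. apply sig_ext. simpl. auto.
    + intro Bc. exists (exist _ _ (HpsiL _ (proj2_sig c))). split.
      * replace (lift_el _) with c; auto. apply sig_ext. simpl. symmetry. apply phi_psi, proj2_sig.
      * simpl. symmetry. apply phi_psi, proj2_sig.
Qed.
End LiftS.

Section PsiS.
Variable K : IDAstr.
Hypothesis HK : is_IDA K.
Hypothesis HP : is_COL (Psi K).
Local Notation J := (ijoin K).
Local Notation "x * y" := (imul K x y).
Local Notation "~~ x" := (ineg K x) (at level 35, right associativity).
Local Notation pr := (@proj1_sig _ _).
Local Notation P := (Psi K).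

Lemma tst (a : ocar P) : tests K (pr a). Proof. exact (proj2_sig a). Qed.
Lemma test_nn x : tests K x -> ~~ ~~ x = x.
Proof. intros [l ->]. apply nnn, HK. Qed.
Lemma nn_test x : tests K (~~ x). Proof. exists x. reflexivity. Qed.

Lemma J_pair_comm x y : J (pair2 x y) = J (pair2 y x).
Proof. f_equal. apply pred_ext. intro z. unfold pair2. tauto. Qed.

Lemma ax2_pair x y : ~~ J (pair2 (~~ ~~ x) (~~ ~~ y)) = ~~ J (pair2 x y).
Proof. rewrite <- (imageP_pair K (fun z => ~~ ~~ z)). apply ax2, HK. Qed.

Lemma le_psi_tests (a b : ocar P) : ole P a b <-> ~~ ~~ J (pair2 (pr a) (pr b)) = pr b.
Proof. simpl. unfold tle, tjoin. tauto. Qed.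

Definition Wof (S : ocar P -> Prop) : icar K -> Prop := fun x => exists w, S w /\ x = pr w.
Definition tj (S : ocar P -> Prop) : ocar P :=
  exist (tests K) (~~ ~~ J (Wof S)) (nn_test _).
Lemma tj_pr S : pr (tj S) = ~~ ~~ J (Wof S). Proof. reflexivity. Qed.

Lemma tj_lub S : is_lub P S (tj S).
Proof.
  set (W := Wof S).
  split.
  - intros a Sa. apply le_psi_tests. rewrite tj_pr. fold W. f_equal.
    assert (E : ~~ J (pair2 (pr a) (~~ ~~ J W)) = ~~ J W).
    { rewrite <- (test_nn (pr a) (tst a)) at 1. rewrite ax2_pair. f_equal.
      apply (J_pair_le K). apply (J_ub K HK). exists a. auto. }
    rewrite E. reflexivity.
  - intros u Hu. apply le_psi_tests. rewrite tj_pr. fold W.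
    set (V := fun y => y = pr u \/ exists a, W a /\ y = J (pair2 a (pr u))).
    assert (E1 : J (pair2 (J W) (pr u)) = J V).
    { apply (ile_antisym K HK).
      - apply J_lub; [exact HK|]. intros x [-> | ->].
        + apply J_lub; [exact HK|]. intros a Wa. apply (ile_trans K HK) with (J (pair2 a (pr u))).
          apply J_pair_ub1, HK. apply J_ub; [exact HK|]. right. eauto.
        + apply J_ub; [exact HK|]. left. auto.
      - apply J_lub; [exact HK|]. intros x [-> | [a [Wa ->]]].
        + apply J_pair_ub2, HK.
        + apply J_lub; [exact HK|]. intros z [-> | ->].
          * apply (ile_trans K HK) with (J W). apply J_ub; auto. apply J_pair_ub1, HK.
          * apply J_pair_ub2, HK. }
    assert (E2 : J (imageP (fun z => ~~ ~~ z) V) = pr u).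
    { apply (J_eq K HK).
      - intros y [z [[-> | [a [[w [Sw ->]] ->]]] ->]].
        + rewrite (test_nn _ (tst u)). apply ile_refl, HK.
        + rewrite (proj1 (le_psi_tests w u) (Hu w Sw)). apply ile_refl, HK.
      - intros v Hv. apply Hv. exists (pr u). split. left; auto. symmetry. apply test_nn, tst. }
    assert (E3 : ~~ J (pair2 (~~ ~~ J W) (pr u)) = ~~ pr u).
    { rewrite <- (test_nn (pr u) (tst u)) at 1. rewrite ax2_pair, E1.
      rewrite <- (ax2 K HK V), E2. reflexivity. }
    rewrite E3. apply test_nn, tst.
Qed.

Lemma psi_jn a b : pr (jn P a b) = ~~ ~~ J (pair2 (pr a) (pr b)).
Proof.
  unfold jn. rewrite (osup_eq P HP a _ (tj (pair2 a b))) by apply tj_lub. simpl.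
  f_equal. f_equal. f_equal. apply pred_ext. intro x. unfold pair2. split.
  - intros [w [[-> | ->] ->]]; auto.
  - intros [-> | ->]; unfold Wof; eauto.
Qed.

Lemma psi_mt a b : mt P a b = oc P (jn P (oc P a) (oc P b)).
Proof. rewrite (oc_jn P HP), !(ocK P HP). reflexivity. Qed.

Lemma psi_sas m w : pr (sas P m w) = ~~ J (pair2 (~~ pr m) (~~ J (pair2 (~~ pr m) (pr w)))).
Proof.
  unfold sas. rewrite psi_mt. simpl. rewrite psi_jn. simpl. rewrite psi_jn. simpl.
  rewrite !(nnn K HK). reflexivity.
Qed.

Lemma psi_top t : is_top P t -> pr t = ~~ ~~ iunit K.
Proof.
  intro Ht.
  set (eh := exist (tests K) (~~ ~~ iunit K) (nn_test _) : ocar P).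
  assert (Hkey : forall a : ocar P, ole P (oc P (jn P a eh)) a).
  { intro a. destruct (tst a) as [x Ex].
    pose proof (ax4 K HK x (iunit K)) as H4.
    rewrite (mul1r K HK), (nnn K HK) in H4. rewrite <- Ex in H4.
    apply le_psi_tests.
    assert (Eo: pr (oc P (jn P a eh)) = ~~ J (pair2 (pr a) (iunit K))).
    { simpl. rewrite psi_jn. simpl. rewrite (nnn K HK).
      rewrite <- (test_nn (pr a) (tst a)) at 1. apply ax2_pair. }
    rewrite Eo, J_pair_comm.
    apply (f_equal (fun z => ~~ z)) in H4. rewrite (test_nn _ (tst a)) in H4.
    symmetry. exact H4. }
  destruct (lub_ex P HP (fun _ => False)) as [z [_ Hz]].
  assert (Hz0 : forall w, ole P z w) by (intro w; apply Hz; intros x []).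
  assert (E1 : jn P z eh = eh).
  { apply (jn_char P HP). apply Hz0. apply le_refl, HP. intros; auto. }
  pose proof (Hkey z) as H. rewrite E1 in H.
  assert (Htop : is_top P eh).
  { intro w. apply (oc_le_iff P HP). eapply (le_trans P HP). exact H. apply Hz0. }
  rewrite (top_unique P HP t eh); auto.
Qed.
End PsiS.

Section KS.
Variable T : TFun.
Hypothesis HT1 : T1 T.
Hypothesis HT2 : T2 T.
Variable K : IDAstr.
Hypothesis HKT : is_TODA T K.
Local Notation J := (ijoin K).
Local Notation "x * y" := (imul K x y).
Local Notation ng := (ineg K).
Local Notation pr := (@proj1_sig _ _).
Local Notation G := (Gamma T (Psi K)).
Local Notation LP := (Lin (Psi K)).

Lemma KI : is_IDA K. Proof. destruct HKT as [a _]; exact a. Qed.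
Lemma KP : is_COL (Psi K). Proof. destruct HKT as [_ [a _]]; exact a. Qed.
Lemma Kgen : forall A : icar K -> Prop, (forall x, T K x -> A x) ->
     (forall x y, A x -> A y -> A (imul K x y)) ->
     (forall x, A x -> A (iinv K x)) ->
     (forall S, (forall x, S x -> A x) -> A (ijoin K S)) ->
     forall x, A x.
Proof. destruct HKT as [_ [_ [a _]]]; exact a. Qed.
Lemma Kuniq : forall S U : icar K -> Prop, (forall x, S x -> T K x) -> (forall x, U x -> T K x) ->
     (ijoin K S = ijoin K U <-> (forall x, S x <-> U x)).
Proof. destruct HKT as [_ [_ [_ [a _]]]]; exact a. Qed.
Lemma Ksep : forall s t, T K s -> T K t -> (s = t <-> equivT K s t).
Proof. destruct HKT as [_ [_ [_ [_ a]]]]; exact a. Qed.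

Lemma Tt k : tests K k -> T K k. Proof. apply (HT1 K KI). Qed.
Lemma Tm x y : T K x -> T K y -> T K (x * y). Proof. apply (HT1 K KI). Qed.
Lemma Ti x : T K x -> T K (iinv K x). Proof. apply (HT1 K KI). Qed.
Lemma Tu : T K (iunit K). Proof. apply (HT1 K KI). Qed.

Let H2 := HT2 K KI KP Ksep.
Lemma nu_lin k : T K k -> linear (Psi K) (nu K k). Proof. intro. apply H2; auto. Qed.
Lemma nu_T k : T K k -> T LP (nuL K k). Proof. intro. apply H2; auto. Qed.
Lemma nu_inj k l : T K k -> T K l -> nuL K k = nuL K l -> k = l. Proof. apply H2. Qed.
Lemma nu_surj f : T LP f -> exists k, T K k /\ nuL K k = f. Proof. apply H2. Qed.
Lemma nu_mul k l : T K k -> T K l -> nuL K (k * l) = imul LP (nuL K k) (nuL K l). Proof. apply H2. Qed.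
Lemma nu_unit : nuL K (iunit K) = iunit LP. Proof. apply H2. Qed.
Lemma nu_inv k : T K k -> nuL K (iinv K k) = iinv LP (nuL K k). Proof. apply H2. Qed.
Lemma nuL_proj k : T K k -> pr (nuL K k) = nu K k.
Proof. intro Tk. apply mkLin_proj, nu_lin, Tk. Qed.

Definition isS (k : icar K) (S : icar K -> Prop) := (forall s, S s -> T K s) /\ J S = k.

Lemma Sk_ex k : exists S, isS k S.
Proof.
  revert k. apply Kgen.
  - intros x Tx. exists (fun c => c = x). split. intros s ->; auto. apply J_single, KI.
  - intros x y [S [HS <-]] [U [HU <-]]. exists (fun c => exists s u, S s /\ U u /\ c = s * u).
    split. intros c [s [u [Ss [Uu ->]]]]. apply Tm; auto. symmetry. apply J_mul, KI.
  - intros x [S [HS <-]]. exists (imageP (iinv K) S). split.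
    intros c [s [Ss ->]]. apply Ti; auto. symmetry. apply invJ, KI.
  - intros F HF. exists (fun s => exists x, F x /\ exists S, isS x S /\ S s). split.
    + intros s [x [Fx [S [[HS _] Ss]]]]. auto.
    + apply (ile_antisym K KI).
      * apply (J_lub K KI). intros s [x [Fx [S [[HS ES] Ss]]]].
        apply (ile_trans K KI) with x. rewrite <- ES. apply (J_ub K KI), Ss. apply (J_ub K KI), Fx.
      * apply (J_lub K KI). intros x Fx. destruct (HF x Fx) as [S [HS ES]]. rewrite <- ES.
        apply (J_lub K KI). intros s Ss. apply (J_ub K KI). exists x. split; auto. exists S.
        split; auto. split; auto.
Qed.

Lemma Sk_uniq k S S' : isS k S -> isS k S' -> forall s, S s <-> S' s.
Proof. intros [H1 E1] [H2' E2]. apply Kuniq; auto. congruence. Qed.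

Lemma lam_char k S : isS k S -> forall c, lam T K k c <-> exists s, S s /\ pr c = nuL K s.
Proof.
  intros HS c. unfold lam. split.
  - intros [S' [HS' [ES' [s [S's E]]]]]. exists s. split; auto.
    apply (Sk_uniq k S S'); auto. split; auto.
  - intros [s [Ss E]]. exists S. destruct HS as [HS ES]. split; auto. split; auto. eauto.
Qed.

Lemma nuT_el s (Ts : T K s) : {x : LinT (Psi K) | T LP x}.
Proof. exists (nuL K s). apply nu_T, Ts. Defined.

Lemma nuT_el_pr s Ts : pr (nuT_el s Ts) = nuL K s. Proof. reflexivity. Qed.

Lemma ax2' (X : icar K -> Prop) : ng (ng (J (imageP (fun x => ng (ng x)) X))) = ng (ng (J X)).
Proof. f_equal. apply ax2, KI. Qed.

Lemma psi_oc (a : ocar (Psi K)) : pr (oc (Psi K) a) = ng (pr a). Proof. reflexivity. Qed.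

Lemma nu_neg k : nuL K (ng k) = ineg LP (ijoin LP (pj LP (T LP) (lam T K k))).
Proof.
  destruct (Sk_ex k) as [S HS].
  destruct (top_ex (Psi K) KP) as [t Ht].
  set (F := ijoin LP (pj LP (T LP) (lam T K k))).
  assert (EF : pr (pr F t) = ng (ng k)).
  { assert (Hl : is_lub (Psi K) (fun y => exists f, pj LP (T LP) (lam T K k) f /\ y = pr f t) (pr F t))
      by apply (LJ_lub (Psi K) KP).
    rewrite (lub_unique (Psi K) KP _ _ _ Hl (tj_lub K KI _)). simpl.
    transitivity (ng (ng (J (imageP (fun x => ng (ng x)) (fun y => exists s, S s /\ y = s * pr t))))).
    { f_equal. f_equal. f_equal. apply pred_ext. intro y. unfold Wof, imageP, pj. split.
      - intros [w [[f [[c [Hc ->]] ->]] ->]]. apply (lam_char k S HS) in Hc. destruct Hc as [s [Ss E]].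
        exists (s * pr t). split; eauto. rewrite E, nuL_proj by (apply HS; auto). reflexivity.
      - intros [z [[s [Ss ->]] ->]]. exists (nu K s t). split; [|reflexivity].
        exists (nuL K s). rewrite nuL_proj by (apply HS; auto). split; auto.
        exists (nuT_el s (proj1 HS s Ss)). split; auto. apply (lam_char k S HS). eauto. }
    rewrite ax2'.
    replace (J (fun y => exists s, S s /\ y = s * pr t)) with (k * pr t)
      by (destruct HS as [_ ES]; rewrite <- ES, (mulJl K KI); reflexivity).
    rewrite (psi_top K KI KP t Ht), (ax1 K KI), (mul1r K KI). reflexivity. }
  rewrite (LN_piL (Psi K) KP F t Ht). clearbody F. apply Lin_ext.
  rewrite (piL_proj (Psi K) KP), nuL_proj by (apply Tt; exists k; reflexivity).
  extensionality w. apply sig_ext. rewrite (psi_sas K KI KP). rewrite psi_oc, EF. change (pr (nu K (ng k) w)) with (bullet K (ng k) (pr w)).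
  unfold bullet. rewrite !(nnn K KI).
  rewrite <- (ax4 K KI (ng k) (pr w)), (nnn K KI). reflexivity.
Qed.

Lemma Pmul_mem (K0 : IDAstr) (L0 : icar K0 -> Prop) A B c : imul (Pset K0 L0) A B c <->
  exists a b, A a /\ B b /\ proj1_sig c = imul K0 (proj1_sig a) (proj1_sig b).
Proof. reflexivity. Qed.
Lemma Pinv_mem (K0 : IDAstr) (L0 : icar K0 -> Prop) A c : iinv (Pset K0 L0) A c <->
  exists a, A a /\ proj1_sig c = iinv K0 (proj1_sig a).
Proof. reflexivity. Qed.
Lemma Punit_mem (K0 : IDAstr) (L0 : icar K0 -> Prop) c : iunit (Pset K0 L0) c <->
  proj1_sig c = iunit K0.
Proof. reflexivity. Qed.
Lemma Pjoin_mem (K0 : IDAstr) (L0 : icar K0 -> Prop) S c : ijoin (Pset K0 L0) S c <->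
  exists A, S A /\ A c.
Proof. reflexivity. Qed.

Lemma isS_single x : T K x -> isS x (fun c => c = x).
Proof. intro Tx. split. intros s ->; auto. apply J_single, KI. Qed.

Lemma isS_union (F : icar K -> Prop) :
  isS (J F) (fun s => exists x, F x /\ exists S, isS x S /\ S s).
Proof.
  split.
  + intros s [x [Fx [S [[HS _] Ss]]]]. auto.
  + apply (ile_antisym K KI).
    * apply (J_lub K KI). intros s [x [Fx [S [[HS ES] Ss]]]].
      apply (ile_trans K KI) with x. rewrite <- ES. apply (J_ub K KI), Ss. apply (J_ub K KI), Fx.
    * apply (J_lub K KI). intros x Fx. destruct (Sk_ex x) as [S [HS ES]]. rewrite <- ES.
      apply (J_lub K KI). intros s Ss. apply (J_ub K KI). exists x. split; auto. exists S.
      split; auto. split; auto.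
Qed.

Lemma lam_mor : is_TODA_mor K G (lam T K).
Proof.
  split; [split; [|split; [|split; [|split]]]|split].
  - intro F. apply pred_ext. intro c. rewrite (lam_char _ _ (isS_union F)). unfold Gamma; rewrite ?Pmul_mem, ?Pinv_mem, ?Punit_mem, ?Pjoin_mem. unfold imageP. split.
    + intros [s [[x [Fx [S [HS Ss]]]] E]]. exists (lam T K x). split; eauto.
      apply (lam_char x S HS). eauto.
    + intros [A [[x [Fx ->]] Hc]]. destruct (Sk_ex x) as [S HS].
      apply (lam_char x S HS) in Hc. destruct Hc as [s [Ss E]]. exists s. split; eauto.
  - intros k l. destruct (Sk_ex k) as [S HS]. destruct (Sk_ex l) as [U HU].
    assert (HV : isS (k * l) (fun c => exists s u, S s /\ U u /\ c = s * u)).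
    { destruct HS as [HS ES], HU as [HU EU]. split.
      intros c [s [u [Ss [Uu ->]]]]. apply Tm; auto. rewrite <- ES, <- EU. symmetry. apply J_mul, KI. }
    apply pred_ext. intro c. rewrite (lam_char _ _ HV). unfold Gamma; rewrite ?Pmul_mem, ?Pinv_mem, ?Punit_mem, ?Pjoin_mem. split.
    + intros [v [[s [u [Ss [Uu ->]]]] E]].
      exists (nuT_el s (proj1 HS s Ss)), (nuT_el u (proj1 HU u Uu)). rewrite !nuT_el_pr. split; [|split].
      * apply (lam_char k S HS). eauto.
      * apply (lam_char l U HU). eauto.
      * rewrite E. apply nu_mul; [apply HS|apply HU]; auto.
    + intros [a [b [Ha [Hb E]]]]. apply (lam_char k S HS) in Ha. apply (lam_char l U HU) in Hb.
      destruct Ha as [s [Ss Ea]], Hb as [u [Uu Eb]]. exists (s * u). split. eauto.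
      rewrite E, Ea, Eb. symmetry. apply nu_mul; [apply HS|apply HU]; auto.
  - intros k. destruct (Sk_ex k) as [S HS].
    assert (HV : isS (iinv K k) (imageP (iinv K) S)).
    { destruct HS as [HS ES]. split.
      intros c [s [Ss ->]]. apply Ti; auto. rewrite <- ES. symmetry. apply invJ, KI. }
    apply pred_ext. intro c. rewrite (lam_char _ _ HV). unfold Gamma; rewrite ?Pmul_mem, ?Pinv_mem, ?Punit_mem, ?Pjoin_mem. split.
    + intros [v [[s [Ss ->]] E]]. exists (nuT_el s (proj1 HS s Ss)). rewrite !nuT_el_pr. split.
      * apply (lam_char k S HS). eauto.
      * rewrite E. apply nu_inv. apply HS; auto.
    + intros [a [Ha E]]. apply (lam_char k S HS) in Ha. destruct Ha as [s [Ss Ea]].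
      exists (iinv K s). split. exists s; auto. rewrite E, Ea. symmetry. apply nu_inv. apply HS; auto.
  - apply pred_ext. intro c. rewrite (lam_char _ _ (isS_single _ Tu)). unfold Gamma; rewrite ?Pmul_mem, ?Pinv_mem, ?Punit_mem, ?Pjoin_mem. split.
    + intros [s [-> E]]. rewrite E. apply nu_unit.
    + intro E. exists (iunit K). split; auto. rewrite E. symmetry. apply nu_unit.
  - intros k. assert (Tn : T K (ng k)) by (apply Tt; exists k; reflexivity).
    apply pred_ext. intro c. rewrite (lam_char _ _ (isS_single _ Tn)).
    change (ineg G (lam T K k) c) with (pr c = ineg LP (ijoin LP (pj LP (T LP) (lam T K k)))).
    rewrite <- nu_neg. split.
    + intros [s [-> E]]. exact E.
    + intro E. eauto.
  - intros k l E. destruct (Sk_ex k) as [S HS]. destruct (Sk_ex l) as [U HU].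
    destruct HS as [HS' ES] eqn:HSe. destruct HU as [HU' EU] eqn:HUe.
    rewrite <- ES, <- EU. f_equal. apply pred_ext. intro s.
    split.
    + intro Ss. assert (Hc : lam T K k (nuT_el s (HS' s Ss))) by (apply (lam_char k S HS); eauto).
      rewrite E in Hc. apply (lam_char l U HU) in Hc. destruct Hc as [u [Uu Eu]]. simpl in Eu.
      replace s with u; auto. symmetry. apply nu_inj; auto.
    + intro Uu. assert (Hc : lam T K l (nuT_el s (HU' s Uu))) by (apply (lam_char l U HU); eauto).
      rewrite <- E in Hc. apply (lam_char k S HS) in Hc. destruct Hc as [u [Su Eu]]. simpl in Eu.
      replace s with u; auto. symmetry. apply nu_inj; auto.
  - intro B. set (S := fun s => T K s /\ exists c, B c /\ pr c = nuL K s).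
    assert (HS : isS (J S) S) by (split; [intros s [Ts _]; auto|reflexivity]).
    exists (J S). apply pred_ext. intro c. rewrite (lam_char _ _ HS). split.
    + intros [s [[Ts [c' [Bc' E']]] E]]. replace c with c'; auto. apply sig_ext. congruence.
    + intro Bc. destruct (nu_surj (pr c) (proj2_sig c)) as [s [Ts Es]].
      exists s. split; auto. split; auto. exists c. auto.
Qed.

Lemma Sk_prop k : exists S : icar K -> Prop,
     (forall s, S s -> T K s) /\ ijoin K S = k /\
     forall S' : icar K -> Prop, (forall s, S' s -> T K s) -> ijoin K S' = k ->
       forall s, S' s <-> S s.
Proof.
  destruct (Sk_ex k) as [S [HS ES]]. exists S. split; auto. split; auto.
  intros S' HS' ES' s. apply (Sk_uniq k S' S); split; auto.
Qed.
End KS.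

Section NatS.
Variable T : TFun.
Hypothesis HT1 : T1 T.
Hypothesis HT2 : T2 T.
Hypothesis HT4 : T4 T.
Variables K1 K2 : IDAstr.
Hypothesis H1 : is_TODA T K1.
Hypothesis H2 : is_TODA T K2.
Variable phi : icar K1 -> icar K2.
Hypothesis Hphi : is_TODA_mor K1 K2 phi.
Local Notation pr := (@proj1_sig _ _).

Lemma phiJ' S : phi (ijoin K1 S) = ijoin K2 (imageP phi S). Proof. apply Hphi. Qed.
Lemma phiM' x y : phi (imul K1 x y) = imul K2 (phi x) (phi y). Proof. apply Hphi. Qed.
Lemma phiN' x : phi (ineg K1 x) = ineg K2 (phi x). Proof. apply Hphi. Qed.
Lemma phi_inj' x y : phi x = phi y -> x = y. Proof. apply Hphi. Qed.
Lemma phi_surj' y : exists x, phi x = y. Proof. apply Hphi. Qed.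

Lemma phi_T k : T K1 k -> T K2 (phi k).
Proof. apply (HT4 K1 K2 phi (KI T K1 H1) (KI T K2 H2) (proj1 Hphi)). Qed.
Lemma phi_test x : tests K1 x -> tests K2 (phi x).
Proof. intros [l ->]. exists (phi l). apply phiN'. Qed.

Definition gP (w : ocar (Psi K1)) : ocar (Psi K2) := exist _ (phi (pr w)) (phi_test _ (proj2_sig w)).

Lemma g_surj (g : ocar (Psi K1) -> ocar (Psi K2)) : (forall w, pr (g w) = phi (pr w)) ->
  forall y, exists x, g x = y.
Proof.
  intros Hg [y [l ->]]. destruct (phi_surj' l) as [l' <-].
  exists (exist _ (ineg K1 l') (ex_intro _ l' eq_refl)). apply sig_ext. rewrite Hg. simpl. apply phiN'.
Qed.

Lemma gP_mor : is_COL_mor (Psi K1) (Psi K2) gP.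
Proof.
  split; [split|split].
  - intros a b E. apply (f_equal (@proj1_sig _ _)) in E. simpl in E. apply sig_ext, phi_inj', E.
  - apply g_surj. reflexivity.
  - intros a b. rewrite !le_psi_tests. simpl. split.
    + intro E. rewrite <- (imageP_pair K1 phi (pr a) (pr b)), <- phiJ', <- !phiN', E. reflexivity.
    + intro E. apply phi_inj'. rewrite !phiN', phiJ', imageP_pair. exact E.
  - intro a. apply sig_ext. simpl. apply phiN'.
Qed.

Lemma Psi_fun : exists g : ocar (Psi K1) -> ocar (Psi K2),
  (forall w, pr (g w) = phi (pr w)) /\ is_COL_mor (Psi K1) (Psi K2) g.
Proof. exists gP. split. reflexivity. apply gP_mor. Qed.

Lemma lam_nat (g : ocar (Psi K1) -> ocar (Psi K2)) : (forall w, pr (g w) = phi (pr w)) ->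
  forall k, Gamma_mor T (Psi K1) (Psi K2) g (lam T K1 k) = lam T K2 (phi k).
Proof.
  intros Hg k. destruct (Sk_ex T HT1 K1 H1 k) as [S [HS ES]].
  assert (HS2 : isS T K2 (phi k) (imageP phi S)).
  { split. intros s2 [s [Ss ->]]. apply phi_T; auto. rewrite <- ES. symmetry. apply phiJ'. }
  assert (Hkey : forall s x, T K1 s -> g (nu K1 s x) = nu K2 (phi s) (g x)).
  { intros s x Ts. apply sig_ext. rewrite Hg. simpl. rewrite Hg. unfold bullet.
    rewrite !phiN', phiM'. reflexivity. }
  apply pred_ext. intro c. rewrite (lam_char T K2 H2 _ _ HS2 c). unfold Gamma_mor. split.
  - intros [a [Ha Hc]]. apply (lam_char T K1 H1 k S (conj HS ES)) in Ha. destruct Ha as [s [Ss Ea]].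
    exists (phi s). split. exists s; auto.
    apply Lin_ext. rewrite (nuL_proj T HT2 K2 H2) by (apply phi_T; auto).
    extensionality y. destruct (g_surj g Hg y) as [x <-].
    rewrite Hc, Ea, (nuL_proj T HT2 K1 H1) by auto. apply Hkey; auto.
  - intros [s2 [[s [Ss ->]] E]]. exists (nuT_el T HT2 K1 H1 s (HS s Ss)). split.
    + apply (lam_char T K1 H1 k S (conj HS ES)). exists s. split; auto.
    + intro x. cbn [nuT_el proj1_sig]. rewrite E, (nuL_proj T HT2 K2 H2), (nuL_proj T HT2 K1 H1) by (auto; apply phi_T; auto).
      symmetry. apply Hkey; auto.
Qed.
End NatS.

Lemma conjL_inj (M N : OLstr) k (Hk : is_COL_mor M N k) a b :
  conjL M N k Hk a = conjL M N k Hk b -> a = b.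
Proof.
  intro E. apply Lin_ext. extensionality x. apply (k_inj M N k Hk).
  rewrite <- (proj2 (conjL_char M N k Hk a _) eq_refl x).
  rewrite <- (proj2 (conjL_char M N k Hk b _) eq_refl x).
  rewrite E. reflexivity.
Qed.

Lemma conj_T (T : TFun) (HT1 : T1 T) (HT4 : T4 T) M N (HM : is_COL M) (HN : is_COL N) k
  (Hk : is_COL_mor M N k) a : T (Lin M) a -> T (Lin N) (conjL M N k Hk a).
Proof. apply (HT4 _ _ _ (LinI M HM) (LinI N HN) (conjL_mor M N HM HN k Hk)). Qed.

Lemma Gamma_mor_lift (T : TFun) M N k (Hk : is_COL_mor M N k) :
  Gamma_mor T M N k = liftP (Lin M) (Lin N) (T (Lin M)) (T (Lin N)) (conjL M N k Hk).
Proof.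
  extensionality A. apply pred_ext. intro c. unfold Gamma_mor, liftP. split.
  - intros [a [Aa H]]. exists a. split; auto. apply (proj1 (conjL_char M N k Hk _ _)), H.
  - intros [a [Aa H]]. exists a. split; auto. apply (proj2 (conjL_char M N k Hk _ _)), H.
Qed.

Theorem theorem6p5 (T : TFun)
  (HT1 : T1 T) (HT2 : T2 T) (HT3 : T3 T) (HT4 : T4 T) :
  (* Gamma : COL -> T-ODA is a functor *)
  (forall M, is_COL M -> is_TODA T (Gamma T M)) /\
  (forall M N (k : ocar M -> ocar N), is_COL M -> is_COL N -> is_COL_mor M N k ->
     (forall a, T (Lin M) a -> exists c, T (Lin N) c /\
        forall x, proj1_sig c (k x) = k (proj1_sig a x)) /\
     is_TODA_mor (Gamma T M) (Gamma T N) (Gamma_mor T M N k)) /\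
  (forall M, is_COL M -> forall A, Gamma_mor T M M (fun x => x) A = A) /\
  (forall M N P (k1 : ocar M -> ocar N) (k2 : ocar N -> ocar P),
     is_COL M -> is_COL N -> is_COL P -> is_COL_mor M N k1 -> is_COL_mor N P k2 ->
     forall A, Gamma_mor T M P (fun x => k2 (k1 x)) A
               = Gamma_mor T N P k2 (Gamma_mor T M N k1 A)) /\
  (* Psi : T-ODA -> COL is a functor (its morphism part is restriction) *)
  (forall K, is_TODA T K -> is_COL (Psi K)) /\
  (forall K1 K2 (phi : icar K1 -> icar K2), is_TODA T K1 -> is_TODA T K2 ->
     is_TODA_mor K1 K2 phi ->
     exists g : ocar (Psi K1) -> ocar (Psi K2),
       (forall w, proj1_sig (g w) = phi (proj1_sig w)) /\ is_COL_mor (Psi K1) (Psi K2) g) /\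
  (* mu : 1_COL => Psi o Gamma, mu_M(m) = {pi_m}, is a natural isomorphism *)
  (forall M, is_COL M ->
     exists mu : ocar M -> ocar (Psi (Gamma T M)),
       (forall m, proj1_sig (mu m) = singL T M (piL M m)) /\
       is_COL_mor M (Psi (Gamma T M)) mu) /\
  (forall M N (k : ocar M -> ocar N), is_COL M -> is_COL N -> is_COL_mor M N k ->
     forall m, Gamma_mor T M N k (singL T M (piL M m)) = singL T N (piL N (k m))) /\
  (* lambda : 1_TODA => Gamma o Psi is a natural isomorphism *)
  (forall K, is_TODA T K -> forall k, exists S : icar K -> Prop,
     (forall s, S s -> T K s) /\ ijoin K S = k /\
     forall S' : icar K -> Prop, (forall s, S' s -> T K s) -> ijoin K S' = k ->
       forall s, S' s <-> S s) /\
  (forall K, is_TODA T K -> is_TODA_mor K (Gamma T (Psi K)) (lam T K)) /\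
  (forall K1 K2 (phi : icar K1 -> icar K2), is_TODA T K1 -> is_TODA T K2 ->
     is_TODA_mor K1 K2 phi ->
     forall g : ocar (Psi K1) -> ocar (Psi K2),
       (forall w, proj1_sig (g w) = phi (proj1_sig w)) ->
       forall k, Gamma_mor T (Psi K1) (Psi K2) g (lam T K1 k) = lam T K2 (phi k)).
Proof.
  split. { intros M HM. apply Gamma_TODA; auto. }
  split.
  { intros M N k HM HN Hk. split.
    - intros a Ta. exists (conjL M N k Hk a). split. apply conj_T; auto.
      apply (proj2 (conjL_char M N k Hk _ _)). reflexivity.
    - rewrite (Gamma_mor_lift T M N k Hk). unfold Gamma.
      apply (lift_TODA_mor (Lin M) (Lin N) _ _ (Lt T HT1 M HM) (Lm T HT1 M HM) (Li T HT1 M HM) (Lu T HT1 M HM)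
               _ (conjL_mor M N HM HN k Hk)
               (conj_T T HT1 HT4 M N HM HN k Hk) (conjL_inj M N k Hk)
               (conjL N M (kinv M N k Hk) (kinv_mor M N k Hk))).
      + apply conj_T; auto.
      + intros y _. apply conjL_inv; auto. }
  split.
  { intros M HM A. apply pred_ext. intro c. unfold Gamma_mor. split.
    - intros [a [Aa H]]. replace c with a; auto. apply sig_ext. apply Lin_ext. extensionality x.
      symmetry. apply H.
    - intro Ac. exists c. split; auto. }
  split.
  { intros M N P k1 k2 HM HN HP Hk1 Hk2 A. apply pred_ext. intro c. unfold Gamma_mor. split.
    - intros [a [Aa H]].
      exists (exist _ (conjL M N k1 Hk1 (proj1_sig a)) (conj_T T HT1 HT4 M N HM HN k1 Hk1 _ (proj2_sig a))).
      split.
      + exists a. split; auto. apply (proj2 (conjL_char M N k1 Hk1 _ _)). reflexivity.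
      + intro y. simpl. destruct (proj2 (proj1 Hk1) y) as [x <-].
        rewrite H. f_equal. symmetry. apply (proj2 (conjL_char M N k1 Hk1 _ _) eq_refl).
    - intros [b [[a [Aa H1]] H2]]. exists a. split; auto. intro x. rewrite H2, H1. reflexivity. }
  split. { intros K HK. apply (KP T K HK). }
  split. { intros K1 K2 phi _ _ Hphi. apply Psi_fun, Hphi. }
  split.
  { intros M HM. exists (muG T HT1 M HM). split. reflexivity. apply muG_mor. }
  split.
  { intros M N k HM HN Hk m. apply pred_ext. intro c. unfold Gamma_mor, singL. split.
    - intros [a [Ea H]]. apply (proj1 (conjL_char M N k Hk _ _)) in H. rewrite H, Ea. apply conjL_pi; auto.
    - intro E. exists (exist _ (piL M m) (piL_L T HT1 M HM m)). split; [reflexivity|].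
      apply (proj2 (conjL_char M N k Hk _ _)). rewrite E. simpl. symmetry. apply conjL_pi; auto. }
  split. { intros K HK k. apply Sk_prop; auto. }
  split. { intros K HK. apply lam_mor; auto. }
  { intros K1 K2 phi H1 H2 Hphi g Hg k. apply lam_nat; auto. }
Qed.
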